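(* Let $(a_m)_{m\ge1}$ be positive reals with $\sum_m a_m<\infty$, put $M=\sup_m a_m$, and let $(t_m)_{m\ge1}$ be complex numbers with $\sup_m|t_m|\le T<\infty$. Then each $\theta_{\infty;k}(\vec t)$ is an absolutely convergent series, and for all complex $z$ with $|z|M(1+T)<1$ the series $\sum_{k\ge0}\theta_{\infty;k}(\vec t)z^k$ converges absolutely and \[ \sum_{k\ge0}\theta_{\infty;k}(\vec t)z^k=\prod_{m=1}^{\infty}\Big(1+\frac{a_mz}{1-a_mzt_m}\Big)=\exp\Big(\sum_{j=1}^\infty\frac{z^j}{j}\sum_{m=1}^\infty a_m^j\big(t_m^j-(t_m-1)^j\big)\Big). \] In particular, with $t_m=t$ for all $m$ and $A_\infty(j)=\sum_{m\ge1}a_m^j$, $\sum_k\theta_{\infty;k}(t)z^k=\prod_{m\ge1}\big(1+\frac{a_mz}{1-a_mzt}\big)=\exp\big(\sum_{j\ge1}\frac{z^j}{j}A_\infty(j)(t^j-(t-1)^j)\big)$.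
   Context: For $k\ge0$ let $\mathcal M_{\infty,k}=\{(\ell_1,\dots,\ell_k)\in\mathbb N^k:\ell_1\ge\cdots\ge\ell_k\ge1\}$, $w(\vec\ell)=\prod_j a_{\ell_j}$, $\sigma(\vec\ell)=|\{1\le j\le k-1:\ell_j=\ell_{j+1}\}|$, and $\sigma^{(i)}(\vec\ell)=|\{1\le j\le k-1:\ell_j=\ell_{j+1}=i\}|$. Define $\theta_{\infty;k}(\vec t)=\sum_{\vec\ell\in\mathcal M_{\infty,k}}w(\vec\ell)\prod_{i\ge1}t_i^{\sigma^{(i)}(\vec\ell)}$ and $\theta_{\infty;k}(t)=\sum_{\vec\ell\in\mathcal M_{\infty,k}}w(\vec\ell)t^{\sigma(\vec\ell)}$, with value $1$ for $k=0$. *)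

(* Defs.v *)
From Stdlib Require Export Reals List Arith.
Export ListNotations.
Open Scope R_scope.

Definition Complex : Type := (R * R)%type.
Definition RtoC (x : R) : Complex := (x, 0).
Definition C0 : Complex := (0, 0).
Definition C1 : Complex := (1, 0).
Definition Cadd (z w : Complex) : Complex := (fst z + fst w, snd z + snd w).
Definition Copp (z : Complex) : Complex := (- fst z, - snd z).
Definition Csub (z w : Complex) : Complex := Cadd z (Copp w).
Definition Cmul (z w : Complex) : Complex :=
  (fst z * fst w - snd z * snd w, fst z * snd w + snd z * fst w).
Definition Cinv (z : Complex) : Complex :=
  let d := fst z * fst z + snd z * snd z in (fst z / d, - snd z / d).
Definition Cdiv (z w : Complex) : Complex := Cmul z (Cinv w).
Definition Cnorm (z : Complex) : R := sqrt (fst z * fst z + snd z * snd z).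
Fixpoint Cpow (z : Complex) (n : nat) : Complex :=
  match n with O => C1 | S n => Cmul z (Cpow z n) end.
Definition Cexp (z : Complex) : Complex := (exp (fst z) * cos (snd z), exp (fst z) * sin (snd z)).

Definition Ccv (u : nat -> Complex) (l : Complex) : Prop :=
  Un_cv (fun n => Cnorm (Csub (u n) l)) 0.
Fixpoint Csum_upto (f : nat -> Complex) (n : nat) : Complex :=
  match n with O => f O | S n => Cadd (Csum_upto f n) (f (S n)) end.
Fixpoint Cprod_upto (f : nat -> Complex) (n : nat) : Complex :=
  match n with O => f O | S n => Cmul (Cprod_upto f n) (f (S n)) end.
Definition Cseries_cv (f : nat -> Complex) (S : Complex) : Prop := Ccv (Csum_upto f) S.
Definition Cseries_abs_conv (f : nat -> Complex) : Prop :=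
  exists s : R, Un_cv (sum_f_R0 (fun i => Cnorm (f i))) s.

Fixpoint allLists (N k : nat) : list (list nat) :=
  match k with
  | O => [ [] ]
  | S k => flat_map (fun x => map (cons x) (allLists N k)) (seq 1 N)
  end.
Fixpoint noninc (l : list nat) : bool :=
  match l with
  | x :: ((y :: _) as r) => andb (Nat.leb y x) (noninc r)
  | _ => true
  end.
(* M_{N,k} = elements of M_{infty,k} with l_1 <= N (a finite set, listed without repetition);
   M_{infty,k} is the increasing union of the M_{N,k}. *)
Definition Mset (N k : nat) : list (list nat) := filter noninc (allLists N k).

Definition weight (a : nat -> R) (l : list nat) : R := fold_right (fun x acc => a x * acc) 1 l.
Fixpoint sigma (l : list nat) : nat :=
  match l with
  | x :: ((y :: _) as r) => (if Nat.eqb x y then 1 else 0) + sigma r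
  | _ => O
  end.
Fixpoint sigma_i (i : nat) (l : list nat) : nat :=
  match l with
  | x :: ((y :: _) as r) => (if andb (Nat.eqb x i) (Nat.eqb y i) then 1 else 0) + sigma_i i r
  | _ => O
  end.
Definition maxl (l : list nat) : nat := fold_right Nat.max O l.
Definition Cprod_list (l : list Complex) : Complex := fold_right Cmul C1 l.
Definition Csum_list (l : list Complex) : Complex := fold_right Cadd C0 l.

(* summand of theta_{infty;k}(vec t): w(l) prod_{i>=1} t_i^{sigma^{(i)}(l)};
   factors with i > max l are t_i^0 = 1 and are omitted *)
Definition term_vec (a : nat -> R) (t : nat -> Complex) (l : list nat) : Complex :=
  Cmul (RtoC (weight a l)) (Cprod_list (map (fun i => Cpow (t i) (sigma_i i l)) (seq 1 (maxl l)))).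
(* summand of theta_{infty;k}(t): w(l) t^{sigma(l)} *)
Definition term_sc (a : nat -> R) (t : Complex) (l : list nat) : Complex :=
  Cmul (RtoC (weight a l)) (Cpow t (sigma l)).

Definition thetaN (term : list nat -> Complex) (N k : nat) : Complex := Csum_list (map term (Mset N k)).
(* absolute convergence of sum_{l in M_{infty,k}} term l : the sums of |term l| over the
   finite exhausting sets M_{N,k} are bounded *)
Definition theta_abs_conv (term : list nat -> Complex) (k : nat) : Prop :=
  exists B : R, forall N : nat, fold_right Rplus 0 (map (fun l => Cnorm (term l)) (Mset N k)) <= B.

Definition GF_conclusion (a : nat -> R) (t : nat -> Complex) (term : list nat -> Complex)
  (zdom : Complex -> Prop) : Prop :=
  exists th : nat -> Complex,
    (* th k = theta_{infty;k}, an absolutely convergent series *)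
    (forall k : nat, theta_abs_conv term k /\ Ccv (fun N => thetaN term N k) (th k)) /\
    forall z : Complex, zdom z ->
      Cseries_abs_conv (fun k => Cmul (th k) (Cpow z k)) /\
      exists Sum : Complex,
        Cseries_cv (fun k => Cmul (th k) (Cpow z k)) Sum /\
        Ccv (Cprod_upto (fun i =>
               let m := S i in
               Cadd C1 (Cdiv (Cmul (RtoC (a m)) z)
                             (Csub C1 (Cmul (Cmul (RtoC (a m)) z) (t m)))))) Sum /\
        exists (inner : nat -> Complex) (L : Complex),
          (forall j : nat, (1 <= j)%nat ->
             Cseries_cv (fun i => let m := S i in
                Cmul (RtoC (a m ^ j)) (Csub (Cpow (t m) j) (Cpow (Csub (t m) C1) j))) (inner j)) /\
          Cseries_cv (fun i => let j := S i in
                Cmul (Cdiv (Cpow z j) (RtoC (INR j))) (inner j)) L /\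
          Sum = Cexp L.

(* Main.v *)
From Pilot Require Import Defs.
From Stdlib Require Import Reals Lra Lia Permutation Ring Field.
From Coquelicot Require Import Coquelicot.
Import Pilot.Defs.
Open Scope R_scope.

Lemma Ceq (x y : Complex) : fst x = fst y -> snd x = snd y -> x = y.
Proof. destruct x, y; simpl; intros; subst; reflexivity. Qed.

Ltac cdestr := repeat match goal with | x : Complex |- _ => destruct x end.
Ltac csimpl := unfold Csub, Cadd, Copp, Cmul, C0, C1, RtoC in *; simpl in *.
Ltac cring := cdestr; csimpl; apply Ceq; simpl; ring.

Lemma Complex_ring : ring_theory C0 C1 Cadd Cmul Csub Copp (@eq Complex).
Proof. constructor; intros; cring. Qed.
Add Ring Cring : Complex_ring.

Lemma sumsq_pos (x y : R) : (x, y) <> C0 -> x * x + y * y <> 0.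
Proof.
  intros H E. apply H. unfold C0.
  assert (x = 0) by nra. assert (y = 0) by nra. subst; reflexivity.
Qed.

Lemma Complex_field : field_theory C0 C1 Cadd Cmul Csub Copp Cdiv Cinv (@eq Complex).
Proof.
  constructor.
  - exact Complex_ring.
  - unfold C1, C0; intro H; inversion H; lra.
  - reflexivity.
  - intros [x y] Hp. pose proof (sumsq_pos x y Hp).
    unfold Cinv, Cmul, C1; simpl; apply Ceq; simpl; field; auto.
Qed.
Add Field Cfield : Complex_field.


Lemma RtoC_mul x y : RtoC (x * y) = Cmul (RtoC x) (RtoC y).
Proof. unfold RtoC, Cmul; apply Ceq; simpl; ring. Qed.
Lemma RtoC_add x y : RtoC (x + y) = Cadd (RtoC x) (RtoC y).
Proof. unfold RtoC, Cadd; apply Ceq; simpl; ring. Qed.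
Lemma RtoC_pow x n : RtoC (x ^ n) = Cpow (RtoC x) n.
Proof. induction n; simpl. reflexivity. rewrite RtoC_mul, IHn; reflexivity. Qed.
Lemma Cpow_mul z w n : Cpow (Cmul z w) n = Cmul (Cpow z n) (Cpow w n).
Proof. induction n; simpl. cring. rewrite IHn; ring. Qed.
Lemma Cpow_add z n m : Cpow z (n + m) = Cmul (Cpow z n) (Cpow z m).
Proof. induction n; simpl. ring. rewrite IHn; ring. Qed.

Lemma Cnorm_ge0 z : 0 <= Cnorm z.
Proof. apply sqrt_pos. Qed.
Lemma Cnorm_mul z w : Cnorm (Cmul z w) = Cnorm z * Cnorm w.
Proof.
  destruct z as [x y], w as [u v]; unfold Cnorm, Cmul; simpl.
  rewrite <- sqrt_mult by nra. f_equal; ring.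
Qed.
Lemma Cnorm_fst z : Rabs (fst z) <= Cnorm z.
Proof.
  destruct z as [x y]; unfold Cnorm; simpl.
  rewrite <- sqrt_Rsqr_abs. apply sqrt_le_1_alt. unfold Rsqr; nra.
Qed.
Lemma Cnorm_snd z : Rabs (snd z) <= Cnorm z.
Proof.
  destruct z as [x y]; unfold Cnorm; simpl.
  rewrite <- sqrt_Rsqr_abs. apply sqrt_le_1_alt. unfold Rsqr; nra.
Qed.
Lemma sq_abs x : x * x = Rabs x * Rabs x.
Proof. rewrite <- Rabs_mult; rewrite Rabs_pos_eq; nra. Qed.
Lemma Cnorm_le_sum z : Cnorm z <= Rabs (fst z) + Rabs (snd z).
Proof.
  destruct z as [x y]; unfold Cnorm; simpl.
  pose proof (Rabs_pos x); pose proof (Rabs_pos y).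
  rewrite <- (sqrt_square (Rabs x + Rabs y)) by lra.
  apply sqrt_le_1_alt. rewrite (sq_abs x), (sq_abs y). nra.
Qed.
Lemma Cnorm_triangle z w : Cnorm (Cadd z w) <= Cnorm z + Cnorm w.
Proof.
  destruct z as [x y], w as [u v]; unfold Cnorm, Cadd; simpl.
  set (A := x*x+y*y). set (B := u*u+v*v).
  assert (HA : 0 <= A) by (unfold A; nra). assert (HB : 0 <= B) by (unfold B; nra).
  pose proof (sqrt_pos A); pose proof (sqrt_pos B).
  rewrite <- (sqrt_square (sqrt A + sqrt B)) by lra.
  apply sqrt_le_1_alt.
  assert (Hm : Rabs (x*u+y*v) <= sqrt A * sqrt B).
  { rewrite <- sqrt_mult by auto. rewrite <- sqrt_Rsqr_abs. apply sqrt_le_1_alt.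
    unfold Rsqr, A, B.
    assert (0 <= (x*v-y*u)*(x*v-y*u)) by apply Rle_0_sqr.
    replace ((x*x+y*y)*(u*u+v*v)) with ((x*u+y*v)*(x*u+y*v) + (x*v-y*u)*(x*v-y*u)) by ring.
    lra. }
  pose proof (Rle_abs (x*u+y*v)).
  replace ((sqrt A + sqrt B) * (sqrt A + sqrt B)) with
    (sqrt A * sqrt A + sqrt B * sqrt B + 2 * (sqrt A * sqrt B)) by ring.
  rewrite !sqrt_sqrt by auto.
  replace ((x+u)*(x+u)+(y+v)*(y+v)) with (A + B + 2*(x*u+y*v)) by (unfold A, B; ring).
  lra.
Qed.
Lemma Cnorm_RtoC x : Cnorm (RtoC x) = Rabs x.
Proof. unfold Cnorm, RtoC; simpl. rewrite <- sqrt_Rsqr_abs. f_equal. unfold Rsqr; ring. Qed.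
Lemma Cnorm_C1 : Cnorm C1 = 1.
Proof. change C1 with (RtoC 1). rewrite Cnorm_RtoC. apply Rabs_R1. Qed.
Lemma Cnorm_C0 : Cnorm C0 = 0.
Proof. change C0 with (RtoC 0). rewrite Cnorm_RtoC. apply Rabs_R0. Qed.
Lemma Cnorm_pow z n : Cnorm (Cpow z n) = Cnorm z ^ n.
Proof. induction n; simpl. apply Cnorm_C1. rewrite Cnorm_mul, IHn; reflexivity. Qed.
Lemma Cnorm_opp z : Cnorm (Copp z) = Cnorm z.
Proof. destruct z; unfold Cnorm, Copp; simpl. f_equal; ring. Qed.
Lemma Cnorm_sub_sym z w : Cnorm (Csub z w) = Cnorm (Csub w z).
Proof. replace (Csub z w) with (Copp (Csub w z)) by ring. apply Cnorm_opp. Qed.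
Lemma Cnorm_eq0 z : Cnorm z = 0 -> z = C0.
Proof.
  destruct z as [x y]; unfold Cnorm; simpl; intro H.
  apply sqrt_eq_0 in H; [|nra]. assert (x = 0) by nra; assert (y = 0) by nra; subst; reflexivity.
Qed.
Lemma Cnorm_triangle_sub z w : Cnorm (Csub z w) <= Cnorm z + Cnorm w.
Proof. unfold Csub. rewrite <- (Cnorm_opp w). apply Cnorm_triangle. Qed.
Lemma Cnorm_rev_tri z w : Cnorm z - Cnorm w <= Cnorm (Csub z w).
Proof.
  pose proof (Cnorm_triangle (Csub z w) w). replace (Cadd (Csub z w) w) with z in H by ring. lra.
Qed.
Lemma one_minus_nz w : Cnorm w < 1 -> Csub C1 w <> C0.
Proof.
  intros H E. pose proof (Cnorm_rev_tri C1 w). rewrite E, Cnorm_C0, Cnorm_C1 in H0. lra.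
Qed.
Lemma Cnorm_inv z : z <> C0 -> Cnorm (Cinv z) = / Cnorm z.
Proof.
  intro Hz. assert (Cnorm z <> 0) by (intro E; apply Hz, Cnorm_eq0, E).
  assert (E : Cmul (Cinv z) z = C1) by (field; auto).
  apply (f_equal Cnorm) in E. rewrite Cnorm_mul, Cnorm_C1 in E.
  apply (Rmult_eq_reg_r (Cnorm z)); auto. rewrite E; field; auto.
Qed.

Lemma Un_cv_is_lim u l : Un_cv u l <-> is_lim_seq u l.
Proof. split; apply is_lim_seq_Reals. Qed.

Lemma Ccv_iff u l : Ccv u l <-> Un_cv (fun n => fst (u n)) (fst l) /\ Un_cv (fun n => snd (u n)) (snd l).
Proof.
  unfold Ccv, Un_cv, R_dist. split.
  - intro H; split; intros e He; destruct (H e He) as [N HN]; exists N; intros n Hn;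
    specialize (HN n Hn); rewrite Rminus_0_r, Rabs_pos_eq in HN by apply Cnorm_ge0.
    + eapply Rle_lt_trans; [|exact HN]. apply (Cnorm_fst (Csub (u n) l)).
    + eapply Rle_lt_trans; [|exact HN]. apply (Cnorm_snd (Csub (u n) l)).
  - intros [H1 H2] e He.
    destruct (H1 (e/2)) as [N1 HN1]; [lra|]. destruct (H2 (e/2)) as [N2 HN2]; [lra|].
    exists (max N1 N2); intros n Hn.
    specialize (HN1 n ltac:(lia)). specialize (HN2 n ltac:(lia)).
    rewrite Rminus_0_r, Rabs_pos_eq by apply Cnorm_ge0.
    eapply Rle_lt_trans; [apply Cnorm_le_sum|]. destruct (u n), l; unfold Csub, Cadd, Copp in *; simpl in *. unfold Rminus in *. lra.
Qed.

Lemma Ccv_unique u l1 l2 : Ccv u l1 -> Ccv u l2 -> l1 = l2.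
Proof.
  rewrite !Ccv_iff; intros [A1 B1] [A2 B2]. apply Ceq.
  eapply UL_sequence; eauto. eapply UL_sequence; eauto.
Qed.

Lemma Ccv_ext u v l : (forall n, u n = v n) -> Ccv u l -> Ccv v l.
Proof. intros E H. unfold Ccv in *. intros e He; destruct (H e He) as [N HN]; exists N; intros; rewrite <- E; auto. Qed.

Lemma Ccv_add u v l1 l2 : Ccv u l1 -> Ccv v l2 -> Ccv (fun n => Cadd (u n) (v n)) (Cadd l1 l2).
Proof.
  rewrite !Ccv_iff; intros [A1 B1] [A2 B2]; split; simpl; apply CV_plus; auto.
Qed.
Lemma Ccv_opp u l : Ccv u l -> Ccv (fun n => Copp (u n)) (Copp l).
Proof. rewrite !Ccv_iff; intros [A B]; split; simpl; apply CV_opp; auto. Qed.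
Lemma Ccv_sub u v l1 l2 : Ccv u l1 -> Ccv v l2 -> Ccv (fun n => Csub (u n) (v n)) (Csub l1 l2).
Proof. intros; apply Ccv_add; auto; apply Ccv_opp; auto. Qed.
Lemma CV_const c : Un_cv (fun _ => c) c.
Proof. intros e He; exists O; intros; unfold R_dist; rewrite Rminus_diag, Rabs_R0; lra. Qed.
Lemma Ccv_const c : Ccv (fun _ => c) c.
Proof. rewrite Ccv_iff; split; apply CV_const. Qed.
Lemma Ccv_mul u v l1 l2 : Ccv u l1 -> Ccv v l2 -> Ccv (fun n => Cmul (u n) (v n)) (Cmul l1 l2).
Proof.
  rewrite !Ccv_iff; intros [A1 B1] [A2 B2]; split; simpl;
  [apply CV_minus | apply CV_plus]; apply CV_mult; auto.
Qed.

Lemma Ccv_norm0 u : Un_cv (fun n => Cnorm (u n)) 0 -> Ccv u C0.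
Proof.
  intros H e He; destruct (H e He) as [N HN]; exists N; intros n Hn; specialize (HN n Hn).
  unfold R_dist in *. replace (Csub (u n) C0) with (u n) by ring. auto.
Qed.

Lemma Csum_fst f n : fst (Csum_upto f n) = sum_f_R0 (fun i => fst (f i)) n.
Proof. induction n; simpl; auto. rewrite IHn; reflexivity. Qed.
Lemma Csum_snd f n : snd (Csum_upto f n) = sum_f_R0 (fun i => snd (f i)) n.
Proof. induction n; simpl; auto. rewrite IHn; reflexivity. Qed.

Lemma is_series_Un_cv a l : is_series a l <-> Un_cv (sum_f_R0 a) l.
Proof. rewrite is_series_Reals. unfold infinite_sum, Un_cv. tauto. Qed.

Lemma Cseries_iff f S : Cseries_cv f S <->
  is_series (fun n => fst (f n)) (fst S) /\ is_series (fun n => snd (f n)) (snd S).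
Proof.
  unfold Cseries_cv. rewrite Ccv_iff, !is_series_Un_cv.
  split; intros [A B]; split; eapply Un_cv_ext; try eassumption; intro n;
  first [apply Csum_fst | symmetry; apply Csum_fst | apply Csum_snd | symmetry; apply Csum_snd].
Qed.

Definition CSeries (f : nat -> Complex) : Complex := (Series (fun n => fst (f n)), Series (fun n => snd (f n))).
Definition CEx (f : nat -> Complex) : Prop := ex_series (fun n => fst (f n)) /\ ex_series (fun n => snd (f n)).

Lemma CSeries_correct f : CEx f -> Cseries_cv f (CSeries f).
Proof. intros [A B]. apply Cseries_iff; split; apply Series_correct; auto. Qed.
Lemma Cseries_unique f S : Cseries_cv f S -> S = CSeries f.
Proof.
  intro H; apply Cseries_iff in H; destruct H as [A B]. unfold CSeries; apply Ceq; simpl;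
  symmetry; apply is_series_unique; auto.
Qed.
Lemma Cseries_CEx f S : Cseries_cv f S -> CEx f.
Proof. intro H; apply Cseries_iff in H; destruct H; split; eexists; eauto. Qed.

Lemma CEx_le f g : (forall n, Cnorm (f n) <= g n) -> ex_series g -> CEx f.
Proof.
  intros H Hg; split; apply (@ex_series_le R_AbsRing R_CompleteNormedModule _ g); auto.
  - intro n; unfold norm; simpl; eapply Rle_trans; [|apply H]; apply Cnorm_fst.
  - intro n; unfold norm; simpl; eapply Rle_trans; [|apply H]; apply Cnorm_snd.
Qed.

Lemma abs_conv_iff f : Cseries_abs_conv f <-> ex_series (fun n => Cnorm (f n)).
Proof.
  unfold Cseries_abs_conv. split; intros [s H]; exists s; apply is_series_Un_cv; auto.
Qed.

Lemma ex_series_le_R (a b : nat -> R) : (forall n, Rabs (a n) <= b n) -> ex_series b -> ex_series a.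
Proof. intros H Hb. apply (@ex_series_le R_AbsRing R_CompleteNormedModule _ b); auto. Qed.

Lemma lim_le_const (u : nat -> R) l B : Un_cv u l -> (forall n, u n <= B) -> l <= B.
Proof.
  intros H HB. apply Un_cv_is_lim in H.
  assert (Hc : is_lim_seq (fun _ => B) B) by apply is_lim_seq_const.
  pose proof (is_lim_seq_le u (fun _ => B) l B HB H Hc). simpl in H0. auto.
Qed.
Lemma lim_ge_const (u : nat -> R) l B : Un_cv u l -> (forall n, B <= u n) -> B <= l.
Proof.
  intros H HB. apply Un_cv_is_lim in H.
  assert (Hc : is_lim_seq (fun _ => B) B) by apply is_lim_seq_const.
  pose proof (is_lim_seq_le (fun _ => B) u B l HB Hc H). simpl in H0. auto.
Qed.

Lemma Ccv_norm u l : Ccv u l -> Un_cv (fun n => Cnorm (u n)) (Cnorm l).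
Proof.
  intros H e He; destruct (H e He) as [N HN]; exists N; intros n Hn; specialize (HN n Hn).
  unfold R_dist in *. rewrite Rminus_0_r, Rabs_pos_eq in HN by apply Cnorm_ge0.
  eapply Rle_lt_trans; [|exact HN]. apply Rabs_le; split.
  - pose proof (Cnorm_rev_tri l (u n)). rewrite Cnorm_sub_sym in H0. lra.
  - pose proof (Cnorm_rev_tri (u n) l). lra.
Qed.

Lemma Ccv_norm_le u l B : Ccv u l -> (forall n, Cnorm (u n) <= B) -> Cnorm l <= B.
Proof. intros H HB. eapply lim_le_const; [apply Ccv_norm; eauto| auto]. Qed.

Lemma Ccv_shift1 u l : Ccv (fun n => u (S n)) l -> Ccv u l.
Proof.
  intros H e He; destruct (H e He) as [N HN]; exists (S N); intros n Hn.
  destruct n; [lia|]. apply HN; lia.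
Qed.
Lemma Ccv_shift1' u l : Ccv u l -> Ccv (fun n => u (S n)) l.
Proof. intros H e He; destruct (H e He) as [N HN]; exists N; intros n Hn. apply HN; lia. Qed.

Lemma Csum_add f g n : Csum_upto (fun k => Cadd (f k) (g k)) n = Cadd (Csum_upto f n) (Csum_upto g n).
Proof. induction n; simpl; auto. rewrite IHn; ring. Qed.
Lemma Csum_sub f g n : Csum_upto (fun k => Csub (f k) (g k)) n = Csub (Csum_upto f n) (Csum_upto g n).
Proof. induction n; simpl; auto. rewrite IHn; ring. Qed.
Lemma Csum_scal c f n : Csum_upto (fun k => Cmul c (f k)) n = Cmul c (Csum_upto f n).
Proof. induction n; simpl; auto. rewrite IHn; ring. Qed.
Lemma Csum_ext f g n : (forall k, (k <= n)%nat -> f k = g k) -> Csum_upto f n = Csum_upto g n.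
Proof. induction n; simpl; intros; auto. rewrite IHn, H; auto. Qed.
Lemma Csum_norm f n : Cnorm (Csum_upto f n) <= sum_f_R0 (fun k => Cnorm (f k)) n.
Proof. induction n; simpl. lra. eapply Rle_trans; [apply Cnorm_triangle|lra]. Qed.
Lemma Csum_RtoC g n : Csum_upto (fun k => RtoC (g k)) n = RtoC (sum_f_R0 g n).
Proof. induction n; simpl; auto. rewrite IHn, RtoC_add; reflexivity. Qed.

Lemma Cseries_ext f g S : (forall n, f n = g n) -> Cseries_cv f S -> Cseries_cv g S.
Proof. intros E H; eapply Ccv_ext; [|exact H]; intro n; apply Csum_ext; auto. Qed.
Lemma Cseries_add f g A B : Cseries_cv f A -> Cseries_cv g B -> Cseries_cv (fun n => Cadd (f n) (g n)) (Cadd A B).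
Proof. intros; eapply Ccv_ext; [|apply Ccv_add; eauto]; intro n; simpl; rewrite Csum_add; auto. Qed.
Lemma Cseries_sub f g A B : Cseries_cv f A -> Cseries_cv g B -> Cseries_cv (fun n => Csub (f n) (g n)) (Csub A B).
Proof. intros; eapply Ccv_ext; [|apply Ccv_sub; eauto]; intro n; simpl; rewrite Csum_sub; auto. Qed.
Lemma Cseries_scal c f A : Cseries_cv f A -> Cseries_cv (fun n => Cmul c (f n)) (Cmul c A).
Proof. intros; eapply Ccv_ext; [|apply Ccv_mul; [apply Ccv_const|eauto]]; intro n; simpl; rewrite Csum_scal; auto. Qed.

Lemma Cseries_cons c g S0 : Cseries_cv g S0 ->
  Cseries_cv (fun n => match n with O => c | S n' => g n' end) (Cadd c S0).
Proof.
  intro H. apply Ccv_shift1.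
  assert (E : forall n, Csum_upto (fun n => match n with O => c | S n' => g n' end) (S n) = Cadd c (Csum_upto g n)).
  { induction n; simpl. reflexivity. simpl in IHn. rewrite IHn. ring. }
  eapply Ccv_ext; [intro n; symmetry; apply E|]. apply Ccv_add; [apply Ccv_const|exact H].
Qed.

Lemma Cseries_norm_le f S0 : Cseries_cv f S0 -> ex_series (fun n => Cnorm (f n)) ->
  Cnorm S0 <= Series (fun n => Cnorm (f n)).
Proof.
  intros H Hs. apply (Ccv_norm_le _ _ _ H). intro n. eapply Rle_trans; [apply Csum_norm|].
  apply (is_lim_seq_incr_compare (sum_f_R0 (fun k => Cnorm (f k)))).
  - apply Un_cv_is_lim, is_series_Un_cv, Series_correct; auto.
  - intro m; simpl. pose proof (Cnorm_ge0 (f (S m))); lra.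
Qed.

Lemma Cgeom q : Cnorm q < 1 -> Cseries_cv (Cpow q) (Cinv (Csub C1 q)).
Proof.
  intro Hq. pose proof (one_minus_nz q Hq) as Hnz.
  assert (E : forall n, Csum_upto (Cpow q) n = Cmul (Csub C1 (Cpow q (S n))) (Cinv (Csub C1 q))).
  { induction n. simpl. field; auto. simpl Csum_upto. rewrite IHn. simpl. field; auto. }
  unfold Cseries_cv. eapply Ccv_ext; [intro n; symmetry; apply E|].
  assert (Hl : Cinv (Csub C1 q) = Cmul (Csub C1 C0) (Cinv (Csub C1 q))) by ring.
  assert (H : Ccv (fun n => Cmul (Csub C1 (Cpow q (S n))) (Cinv (Csub C1 q))) (Cmul (Csub C1 C0) (Cinv (Csub C1 q)))).
  2: { rewrite <- Hl in H. exact H. }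
  apply (Ccv_mul (fun n => Csub C1 (Cpow q (S n))) (fun _ => Cinv (Csub C1 q))); [|apply Ccv_const].
  apply (Ccv_sub (fun _ => C1)); [apply Ccv_const|].
  apply Ccv_norm0. apply (Un_cv_ext (fun n => Cnorm q ^ S n)); [intro n; symmetry; apply Cnorm_pow|].
  apply Un_cv_is_lim. apply (is_lim_seq_incr_1 (fun n => Cnorm q ^ n)).
  apply is_lim_seq_geom. rewrite Rabs_pos_eq by apply Cnorm_ge0; auto.
Qed.

Lemma ex_abs_fst x : ex_series (fun n => Cnorm (x n)) -> ex_series (fun n => Rabs (fst (x n))).
Proof.
  intro H; apply (ex_series_le_R _ _ (fun n => Rle_trans _ _ _ (Req_le _ _ (Rabs_Rabsolu _)) (Cnorm_fst (x n))) H).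
Qed.
Lemma ex_abs_snd x : ex_series (fun n => Cnorm (x n)) -> ex_series (fun n => Rabs (snd (x n))).
Proof.
  intro H; apply (ex_series_le_R _ _ (fun n => Rle_trans _ _ _ (Req_le _ _ (Rabs_Rabsolu _)) (Cnorm_snd (x n))) H).
Qed.

Lemma is_series_minus_R (a b : nat -> R) la lb : is_series a la -> is_series b lb ->
  is_series (fun n => a n - b n) (la - lb).
Proof. intros; apply (is_series_minus a b la lb); auto. Qed.
Lemma is_series_plus_R (a b : nat -> R) la lb : is_series a la -> is_series b lb ->
  is_series (fun n => a n + b n) (la + lb).
Proof. intros; apply (is_series_plus a b la lb); auto. Qed.

Lemma Ccauchy x y X Y : Cseries_cv x X -> Cseries_cv y Y ->
  ex_series (fun n => Cnorm (x n)) -> ex_series (fun n => Cnorm (y n)) ->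
  Cseries_cv (fun k => Csum_upto (fun n => Cmul (x n) (y (k - n)%nat)) k) (Cmul X Y).
Proof.
  intros Hx Hy Ax Ay. apply Cseries_iff in Hx as [Hx1 Hx2]. apply Cseries_iff in Hy as [Hy1 Hy2].
  pose proof (ex_abs_fst x Ax); pose proof (ex_abs_snd x Ax).
  pose proof (ex_abs_fst y Ay); pose proof (ex_abs_snd y Ay).
  apply Cseries_iff; split.
  - apply (is_series_ext (fun k => sum_f_R0 (fun n => fst (x n) * fst (y (k-n)%nat)) k
        - sum_f_R0 (fun n => snd (x n) * snd (y (k-n)%nat)) k)).
    + intro n; rewrite Csum_fst, <- minus_sum; reflexivity.
    + simpl. apply is_series_minus_R.
      * apply (is_series_mult (fun n => fst (x n)) (fun n => fst (y n))); auto.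
      * apply (is_series_mult (fun n => snd (x n)) (fun n => snd (y n))); auto.
  - apply (is_series_ext (fun k => sum_f_R0 (fun n => fst (x n) * snd (y (k-n)%nat)) k
        + sum_f_R0 (fun n => snd (x n) * fst (y (k-n)%nat)) k)).
    + intro n; rewrite Csum_snd, <- plus_sum; reflexivity.
    + simpl. apply is_series_plus_R.
      * apply (is_series_mult (fun n => fst (x n)) (fun n => snd (y n))); auto.
      * apply (is_series_mult (fun n => snd (x n)) (fun n => fst (y n))); auto.
Qed.

Lemma sum_lim (u : nat -> nat -> R) (v : nat -> R) K :
  (forall k, Un_cv (fun N => u N k) (v k)) -> Un_cv (fun N => sum_f_R0 (u N) K) (sum_f_R0 v K).
Proof. intro H; induction K; simpl; auto. apply CV_plus; auto. Qed.

Lemma tannery (u : nat -> nat -> R) (v U : nat -> R) :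
  (forall k, Un_cv (fun N => u N k) (v k)) -> (forall N k, Rabs (u N k) <= U k) -> ex_series U ->
  Un_cv (fun N => Series (u N)) (Series v).
Proof.
  intros Hc Hd HU.
  assert (Hv : forall k, Rabs (v k) <= U k).
  { intro k. apply (lim_le_const (fun N => Rabs (u N k))); auto. apply cv_cvabs; auto. }
  assert (HU0 : forall k, 0 <= U k) by (intro k; eapply Rle_trans; [apply Rabs_pos|apply Hv]).
  assert (Eu : forall N, ex_series (fun k => Rabs (u N k))).
  { intro N; apply (ex_series_le_R _ U); auto. intro; rewrite Rabs_Rabsolu; auto. }
  assert (Ev : ex_series (fun k => Rabs (v k))).
  { apply (ex_series_le_R _ U); auto. intro; rewrite Rabs_Rabsolu; auto. }
  assert (tail : forall (w : nat -> R) K, (forall k, Rabs (w k) <= U k) ->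
     Rabs (Series w - sum_f_R0 w K) <= Series U - sum_f_R0 U K).
  { intros w K Hw.
    assert (Ew : ex_series (fun k => Rabs (w k))) by (apply (ex_series_le_R _ U); auto; intro; rewrite Rabs_Rabsolu; auto).
    rewrite (Series_incr_n w (S K)) by (auto; lia || apply ex_series_Rabs; auto).
    rewrite (Series_incr_n U (S K)) by (auto; lia). simpl pred.
    replace (sum_f_R0 w K + Series (fun k => w (S K + k)%nat) - sum_f_R0 w K)
      with (Series (fun k => w (S K + k)%nat)) by ring.
    replace (sum_f_R0 U K + Series (fun k => U (S K + k)%nat) - sum_f_R0 U K)
      with (Series (fun k => U (S K + k)%nat)) by ring.
    eapply Rle_trans; [apply Series_Rabs|].
    - apply (ex_series_incr_n (fun k => Rabs (w k)) (S K)); auto.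
    - apply Series_le; [intro n; split; [apply Rabs_pos|apply Hw]|].
      apply (ex_series_incr_n U (S K)); auto. }
  assert (HUc : Un_cv (sum_f_R0 U) (Series U)) by (apply is_series_Un_cv, Series_correct; auto).
  intros e He.
  destruct (HUc (e/4)) as [K HK]; [lra|].
  specialize (HK K (le_n _)). unfold R_dist in HK.
  destruct (sum_lim u v K Hc (e/4)) as [N0 HN0]; [lra|].
  exists N0; intros N HN. specialize (HN0 N HN). unfold R_dist in *.
  pose proof (tail (u N) K (Hd N)). pose proof (tail v K Hv).
  assert (Series U - sum_f_R0 U K < e/4) by (rewrite Rabs_minus_sym in HK; apply Rabs_lt_between in HK; lra).
  replace (Series (u N) - Series v) with
    ((Series (u N) - sum_f_R0 (u N) K) - (Series v - sum_f_R0 v K) + (sum_f_R0 (u N) K - sum_f_R0 v K)) by ring.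
  assert (Hab : forall x, x <= Rabs x /\ - x <= Rabs x)
    by (intro; split; [apply Rle_abs| rewrite <- Rabs_Ropp; apply Rle_abs]).
  destruct (Hab (Series (u N) - sum_f_R0 (u N) K)), (Hab (Series v - sum_f_R0 v K)),
    (Hab (sum_f_R0 (u N) K - sum_f_R0 v K)).
  apply Rabs_def1; lra.
Qed.

Lemma Ctannery (u : nat -> nat -> Complex) (v : nat -> Complex) (U : nat -> R) :
  (forall k, Ccv (fun N => u N k) (v k)) -> (forall N k, Cnorm (u N k) <= U k) -> ex_series U ->
  Ccv (fun N => CSeries (u N)) (CSeries v).
Proof.
  intros Hc Hd HU. apply Ccv_iff; split; simpl.
  - apply (tannery (fun N k => fst (u N k)) (fun k => fst (v k)) U); auto.
    + intro k; apply Ccv_iff; auto.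
    + intros; eapply Rle_trans; [apply Cnorm_fst|auto].
  - apply (tannery (fun N k => snd (u N k)) (fun k => snd (v k)) U); auto.
    + intro k; apply Ccv_iff; auto.
    + intros; eapply Rle_trans; [apply Cnorm_snd|auto].
Qed.

Lemma CEx_dom (u : nat -> Complex) (U : nat -> R) : (forall k, Cnorm (u k) <= U k) -> ex_series U -> CEx u.
Proof. intros; eapply CEx_le; eauto. Qed.



Lemma NoDup_map_inj {A B} (f : A -> B) l : (forall x y, f x = f y -> x = y) -> NoDup l -> NoDup (map f l).
Proof.
  intros Hf H; induction H; simpl; constructor; auto.
  intro Hin; apply in_map_iff in Hin as [y [E Hy]]. apply Hf in E; subst; auto.
Qed.

Lemma NoDup_flat_map' {A B} (g : A -> list B) L : NoDup L -> (forall x, In x L -> NoDup (g x)) ->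
  (forall x y z, In x L -> In y L -> x <> y -> In z (g x) -> ~ In z (g y)) -> NoDup (flat_map g L).
Proof.
  induction L as [|x L IH]; simpl; intros HL Hg Hd. constructor.
  inversion HL; subst. apply NoDup_app; auto.
  - apply IH; auto. intros; apply (Hd x0 y); auto.
  - intros z Hz Hin. apply in_flat_map in Hin as [y [Hy Hz']].
    apply (Hd x y z); auto. intro; subst; auto.
Qed.

Lemma In_allLists N k l : In l (allLists N k) <-> length l = k /\ Forall (fun x => (1 <= x <= N)%nat) l.
Proof.
  revert l; induction k; intro l; simpl.
  - split. intros [<-|[]]; split; auto. intros [Hl _]; destruct l; [auto|discriminate].
  - rewrite in_flat_map. split.
    + intros [x [Hx Hl]]. apply in_seq in Hx. apply in_map_iff in Hl as [l' [<- Hl']].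
      apply IHk in Hl' as [Hlen HF]. split; simpl; auto. constructor; auto; lia.
    + intros [Hlen HF]. destruct l as [|x l']; [discriminate|]. inversion HF; subst.
      exists x; split; [apply in_seq; lia|]. apply in_map. apply IHk; split; auto.
Qed.

Lemma NoDup_allLists N k : NoDup (allLists N k).
Proof.
  induction k; simpl. constructor; [auto|constructor].
  apply NoDup_flat_map'. apply seq_NoDup.
  - intros; apply NoDup_map_inj; auto. intros a b E; injection E; auto.
  - intros x y z _ _ Hxy Hx Hy. apply in_map_iff in Hx as [l1 [<- _]].
    apply in_map_iff in Hy as [l2 [E _]]. injection E; intros; subst; auto.
Qed.

Definition good (N : nat) (l : list nat) : Prop := Forall (fun x => (1 <= x <= N)%nat) l /\ noninc l = true.

Lemma In_Mset N k l : In l (Mset N k) <-> length l = k /\ good N l.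
Proof. unfold Mset, good. rewrite filter_In, In_allLists. tauto. Qed.

Lemma NoDup_Mset N k : NoDup (Mset N k).
Proof. apply NoDup_filter, NoDup_allLists. Qed.

Lemma noninc_cons x l : noninc (x :: l) = true -> noninc l = true /\ Forall (fun y => (y <= x)%nat) l.
Proof.
  revert x; induction l as [|y l IH]; intros x H. split; auto.
  simpl in H. apply andb_prop in H as [H1 H2]. apply Nat.leb_le in H1.
  destruct (IH y H2) as [_ HF]. split; [exact H2|]. constructor; [exact H1|].
  eapply Forall_impl; [|exact HF]. intros a Ha; simpl in *. lia.
Qed.

Lemma noninc_cons' x l : noninc l = true -> Forall (fun y => (y <= x)%nat) l -> noninc (x :: l) = true.
Proof.
  destruct l as [|y l]; simpl; auto. intros H HF. inversion HF; subst.
  rewrite H. apply Nat.leb_le in H2. rewrite H2. reflexivity.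
Qed.

Lemma noninc_app_repeat x n l : noninc l = true -> Forall (fun y => (y <= x)%nat) l ->
  noninc (repeat x n ++ l) = true.
Proof.
  intros H HF; induction n; simpl; auto. apply noninc_cons'; auto.
  apply Forall_app; split; auto. apply Forall_forall; intros y Hy; apply repeat_spec in Hy; lia.
Qed.

Lemma good_split N l : good (S N) l -> exists n l', l = repeat (S N) n ++ l' /\ good N l'.
Proof.
  induction l as [|x l IH]; intros [HF Hn].
  - exists O, nil; split; auto. split; auto.
  - inversion HF; subst. destruct (noninc_cons x l Hn) as [Hn' Hle].
    destruct (IH (conj H2 Hn')) as [n [l' [E Hg]]].
    destruct (Nat.eq_dec x (S N)) as [Ex|Ex].
    + subst. exists (S n), l'; split; auto.
    + exists O, (x :: l); split; auto. split; [|auto].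
      constructor; [lia|]. apply Forall_forall; intros y Hy.
      rewrite Forall_forall in Hle, H2. specialize (Hle y Hy). specialize (H2 y Hy). lia.
Qed.

Lemma good_app N n l' : good N l' -> good (S N) (repeat (S N) n ++ l').
Proof.
  intros [HF Hn]. split.
  - apply Forall_app; split.
    + apply Forall_forall; intros y Hy; apply repeat_spec in Hy; lia.
    + eapply Forall_impl; [|exact HF]; intros ? ?; simpl in *; lia.
  - apply noninc_app_repeat; auto. eapply Forall_impl; [|exact HF]; intros ? ?; simpl in *; lia.
Qed.

Lemma good_notin N l : good N l -> ~ In (S N) l.
Proof. intros [HF _] Hin. rewrite Forall_forall in HF. specialize (HF _ Hin). lia. Qed.

Lemma repeat_app_inj (x : nat) n1 n2 l1 l2 : repeat x n1 ++ l1 = repeat x n2 ++ l2 ->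
  ~ In x l1 -> ~ In x l2 -> n1 = n2 /\ l1 = l2.
Proof.
  revert n2; induction n1; intros n2 E H1 H2; destruct n2; simpl in E.
  - auto.
  - exfalso; apply H1; rewrite E; left; auto.
  - exfalso; apply H2; rewrite <- E; left; auto.
  - injection E; intro E'. destruct (IHn1 n2 E' H1 H2); auto.
Qed.

Definition Dlist (N k : nat) : list (list nat) :=
  flat_map (fun n => map (fun l => repeat (S N) n ++ l) (Mset N (k - n))) (seq 0 (S k)).

Lemma Mset_S_perm N k : Permutation (Mset (S N) k) (Dlist N k).
Proof.
  apply NoDup_Permutation. apply NoDup_Mset.
  - apply NoDup_flat_map'. apply seq_NoDup.
    + intros; apply NoDup_map_inj; [|apply NoDup_Mset]. intros a b E; apply app_inv_head in E; auto.
    + intros x y z _ _ Hxy Hx Hy. apply in_map_iff in Hx as [l1 [<- H1]].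
      apply in_map_iff in Hy as [l2 [E H2]]. apply In_Mset in H1, H2.
      apply repeat_app_inj in E; [|apply (good_notin N); tauto|apply (good_notin N); tauto].
      destruct E; subst; auto.
  - intro l. rewrite In_Mset. unfold Dlist. rewrite in_flat_map. split.
    + intros [Hlen Hg]. destruct (good_split N l Hg) as [n [l' [E Hg']]].
      exists n. split. apply in_seq. rewrite E, length_app, repeat_length in Hlen. lia.
      apply in_map_iff. exists l'; split; auto. apply In_Mset. split; auto.
      rewrite E, length_app, repeat_length in Hlen. lia.
    + intros [n [Hn Hl]]. apply in_seq in Hn. apply in_map_iff in Hl as [l' [<- Hl']].
      apply In_Mset in Hl' as [Hlen Hg]. split.
      rewrite length_app, repeat_length. lia. apply good_app; auto.
Qed.

Lemma Csum_list_app l1 l2 : Csum_list (l1 ++ l2) = Cadd (Csum_list l1) (Csum_list l2).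
Proof. induction l1; simpl. ring. rewrite IHl1; ring. Qed.
Lemma Csum_list_perm l1 l2 : Permutation l1 l2 -> Csum_list l1 = Csum_list l2.
Proof. induction 1; simpl; auto; try ring. rewrite IHPermutation; auto. congruence. Qed.
Lemma Csum_flat_map {A} (f : list nat -> Complex) (g : A -> list (list nat)) L :
  Csum_list (map f (flat_map g L)) = Csum_list (map (fun x => Csum_list (map f (g x))) L).
Proof. induction L; simpl; auto. rewrite map_app, Csum_list_app, IHL; auto. Qed.
Lemma Csum_seq h s k : Csum_list (map h (seq s (S k))) = Csum_upto (fun n => h (s + n)%nat) k.
Proof.
  induction k. simpl. rewrite Nat.add_0_r; ring.
  rewrite seq_S, map_app, Csum_list_app, IHk. simpl. ring.
Qed.

Lemma Csum_list_scal c (f : list nat -> Complex) L :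
  Csum_list (map (fun l => Cmul c (f l)) L) = Cmul c (Csum_list (map f L)).
Proof. induction L; simpl. ring. rewrite IHL; ring. Qed.

Lemma Csum_list_RtoC (g : list nat -> R) L :
  Csum_list (map (fun l => RtoC (g l)) L) = RtoC (fold_right Rplus 0 (map g L)).
Proof. induction L; simpl. reflexivity. rewrite IHL, RtoC_add; reflexivity. Qed.

Lemma Csum_list_norm (f : list nat -> Complex) L :
  Cnorm (Csum_list (map f L)) <= fold_right Rplus 0 (map (fun l => Cnorm (f l)) L).
Proof.
  induction L; simpl. rewrite Cnorm_C0; lra. eapply Rle_trans; [apply Cnorm_triangle|lra].
Qed.

Lemma thetaN_S (f : list nat -> Complex) N k :
  Csum_list (map f (Mset (S N) k)) =
  Csum_upto (fun n => Csum_list (map (fun l => f (repeat (S N) n ++ l)) (Mset N (k - n)))) k.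
Proof.
  rewrite (Csum_list_perm _ _ (Permutation_map f (Mset_S_perm N k))).
  unfold Dlist. rewrite Csum_flat_map, Csum_seq. simpl.
  apply Csum_ext; intros. rewrite map_map. reflexivity.
Qed.

Lemma Mset_0 k : Mset 0 k = match k with O => cons nil nil | S _ => nil end.
Proof. destruct k; reflexivity. Qed.



Definition cf (a : nat -> R) (t : nat -> Complex) (m n : nat) : Complex :=
  match n with O => C1 | S n' => Cmul (RtoC (a m ^ S n')) (Cpow (t m) n') end.

Lemma weight_app a l1 l2 : weight a (l1 ++ l2) = weight a l1 * weight a l2.
Proof. induction l1; simpl. ring. rewrite IHl1; ring. Qed.
Lemma weight_repeat a x n : weight a (repeat x n) = a x ^ n.
Proof. induction n; simpl; auto. rewrite IHn; ring. Qed.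

Lemma sigma_rep (x : nat) n l : ~ In x l -> sigma (repeat x (S n) ++ l) = (n + sigma l)%nat.
Proof.
  intro H. induction n as [|n IHn].
  - destruct l as [|y r]; simpl; auto.
    destruct (Nat.eqb_spec x y); [subst; exfalso; apply H; left; auto|]. reflexivity.
  - change (repeat x (S (S n)) ++ l) with (x :: (repeat x (S n) ++ l)).
    change (repeat x (S n) ++ l) with (x :: (repeat x n ++ l)) at 1.
    change (sigma (x :: x :: (repeat x n ++ l))) with
      ((if Nat.eqb x x then 1 else 0) + sigma (x :: (repeat x n ++ l)))%nat.
    change (x :: (repeat x n ++ l)) with (repeat x (S n) ++ l). rewrite IHn, Nat.eqb_refl. lia.
Qed.

Lemma sigma_i_rep (x i : nat) n l : ~ In x l ->
  sigma_i i (repeat x (S n) ++ l) = ((if Nat.eqb x i then n else 0) + sigma_i i l)%nat.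
Proof.
  intro H. induction n as [|n IHn].
  - destruct l as [|y r]. simpl; destruct (Nat.eqb x i); reflexivity.
    change (repeat x 1 ++ y :: r) with (x :: y :: r).
    change (sigma_i i (x :: y :: r)) with
      ((if andb (Nat.eqb x i) (Nat.eqb y i) then 1 else 0) + sigma_i i (y :: r))%nat.
    destruct (Nat.eqb x i) eqn:E1, (Nat.eqb y i) eqn:E2; simpl; try lia.
    apply Nat.eqb_eq in E1, E2. exfalso; apply H; simpl; left; congruence.
  - change (repeat x (S (S n)) ++ l) with (x :: (repeat x (S n) ++ l)).
    change (repeat x (S n) ++ l) with (x :: (repeat x n ++ l)) at 1.
    change (sigma_i i (x :: x :: (repeat x n ++ l))) with
      ((if andb (Nat.eqb x i) (Nat.eqb x i) then 1 else 0) + sigma_i i (x :: (repeat x n ++ l)))%nat.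
    change (x :: (repeat x n ++ l)) with (repeat x (S n) ++ l). rewrite IHn.
    destruct (Nat.eqb x i); simpl; lia.
Qed.

Lemma sigma_i_notin i l : ~ In i l -> sigma_i i l = O.
Proof.
  induction l as [|x l IH]; intro H; simpl; auto. destruct l as [|y r]; auto.
  change (((if andb (Nat.eqb x i) (Nat.eqb y i) then 1 else 0) + sigma_i i (y :: r))%nat = O).
  rewrite IH by (intro; apply H; right; auto).
  destruct (Nat.eqb_spec x i); [subst; exfalso; apply H; left; auto|]. reflexivity.
Qed.

Lemma maxl_ge i l : In i l -> (i <= maxl l)%nat.
Proof. induction l; simpl; intro H; [contradiction|]. destruct H as [H|H]; [subst; lia|]. specialize (IHl H); lia. Qed.
Lemma maxl_le l N : Forall (fun x => (x <= N)%nat) l -> (maxl l <= N)%nat.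
Proof. induction 1; simpl; lia. Qed.
Lemma maxl_app l1 l2 : maxl (l1 ++ l2) = Nat.max (maxl l1) (maxl l2).
Proof. induction l1; simpl; auto. rewrite IHl1; lia. Qed.
Lemma maxl_repeat x n : maxl (repeat x (S n)) = x.
Proof. induction n; simpl in *; lia. Qed.

Definition prodK (t : nat -> Complex) (K : nat) (l : list nat) : Complex :=
  Cprod_list (map (fun i => Cpow (t i) (sigma_i i l)) (seq 1 K)).

Lemma Cprod_list_app l1 l2 : Cprod_list (l1 ++ l2) = Cmul (Cprod_list l1) (Cprod_list l2).
Proof. induction l1; simpl. ring. rewrite IHl1; ring. Qed.

Lemma prodK_S t K l : prodK t (S K) l = Cmul (prodK t K l) (Cpow (t (S K)) (sigma_i (S K) l)).
Proof. unfold prodK. rewrite seq_S, map_app, Cprod_list_app. simpl. ring. Qed.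

Lemma prodK_ext t l d : prodK t (maxl l + d) l = prodK t (maxl l) l.
Proof.
  induction d. rewrite Nat.add_0_r; auto.
  rewrite Nat.add_succ_r, prodK_S, IHd, sigma_i_notin. simpl; ring.
  intro Hin; apply maxl_ge in Hin; lia.
Qed.

Lemma good_le N l : good N l -> Forall (fun x => (x <= N)%nat) l.
Proof. intros [HF _]. eapply Forall_impl; [|exact HF]; intros ? ?; simpl in *; lia. Qed.

Lemma term_vec_fac a t N l' n : good N l' ->
  term_vec a t (repeat (S N) n ++ l') = Cmul (cf a t (S N) n) (term_vec a t l').
Proof.
  intro Hg. destruct n as [|n0]. simpl. ring.
  pose proof (good_notin N l' Hg) as Hni.
  pose proof (maxl_le _ _ (good_le N l' Hg)) as Hm.
  unfold term_vec. rewrite weight_app, weight_repeat, maxl_app, maxl_repeat.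
  replace (Nat.max (S N) (maxl l')) with (S N) by lia.
  fold (prodK t (S N) (repeat (S N) (S n0) ++ l')). fold (prodK t (maxl l') l').
  rewrite prodK_S, sigma_i_rep, Nat.eqb_refl, sigma_i_notin by auto.
  replace (prodK t N (repeat (S N) (S n0) ++ l')) with (prodK t (maxl l') l').
  - simpl cf. rewrite Nat.add_0_r. change (a (S N) * a (S N) ^ n0) with (a (S N) ^ S n0).
    rewrite RtoC_mul. match goal with |- ?x = ?y => change (@eq Complex x y) end. ring.
  - rewrite <- (prodK_ext t l' (N - maxl l')). replace (maxl l' + (N - maxl l'))%nat with N by lia.
    unfold prodK. f_equal. apply map_ext_in. intros i Hi. apply in_seq in Hi.
    rewrite sigma_i_rep by auto. destruct (Nat.eqb_spec (S N) i); [lia|]. reflexivity.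
Qed.

Lemma term_sc_fac a t N l' n : good N l' ->
  term_sc a t (repeat (S N) n ++ l') = Cmul (cf a (fun _ => t) (S N) n) (term_sc a t l').
Proof.
  intro Hg. destruct n as [|n0]. simpl. unfold term_sc; simpl. ring.
  pose proof (good_notin N l' Hg) as Hni.
  unfold term_sc. rewrite weight_app, weight_repeat, sigma_rep by auto.
  simpl cf. rewrite Cpow_add. change (a (S N) * a (S N) ^ n0) with (a (S N) ^ S n0).
  rewrite RtoC_mul. match goal with |- ?x = ?y => change (@eq Complex x y) end. ring.
Qed.



Definition THyp (a : nat -> R) (t : nat -> Complex) (term : list nat -> Complex) : Prop :=
  term nil = C1 /\ forall N l' n, good N l' -> term (repeat (S N) n ++ l') = Cmul (cf a t (S N) n) (term l').

Definition Aabs (term : list nat -> Complex) (N k : nat) : R :=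
  fold_right Rplus 0 (map (fun l => Cnorm (term l)) (Mset N k)).

Lemma th_S a t term N k : THyp a t term ->
  thetaN term (S N) k = Csum_upto (fun n => Cmul (cf a t (S N) n) (thetaN term N (k - n))) k.
Proof.
  intros [_ Hf]. unfold thetaN. rewrite thetaN_S. apply Csum_ext; intros n _.
  rewrite <- Csum_list_scal. f_equal. apply map_ext_in. intros l Hl.
  apply In_Mset in Hl. apply Hf; tauto.
Qed.

Lemma RtoC_inj x y : RtoC x = RtoC y -> x = y.
Proof. intro H; injection H; auto. Qed.

Lemma A_S a t term N k : THyp a t term ->
  Aabs term (S N) k = sum_f_R0 (fun n => Cnorm (cf a t (S N) n) * Aabs term N (k - n)) k.
Proof.
  intros [_ Hf]. apply RtoC_inj. unfold Aabs. rewrite <- Csum_list_RtoC, <- Csum_RtoC.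
  rewrite (thetaN_S (fun l => RtoC (Cnorm (term l)))). apply Csum_ext; intros n _.
  rewrite RtoC_mul, <- Csum_list_RtoC, <- Csum_list_scal. f_equal. apply map_ext_in. intros l Hl.
  apply In_Mset in Hl. rewrite Hf by tauto. rewrite Cnorm_mul, RtoC_mul. reflexivity.
Qed.


Lemma thetaN_0 a t term k : THyp a t term -> thetaN term 0 k = match k with O => C1 | S _ => C0 end.
Proof. intros [H0 _]. unfold thetaN. rewrite Mset_0. destruct k; simpl; auto. rewrite H0; ring. Qed.
Lemma Aabs_0 a t term k : THyp a t term -> Aabs term 0 k = match k with O => 1 | S _ => 0 end.
Proof. intros [H0 _]. unfold Aabs. rewrite Mset_0. destruct k; simpl; auto. rewrite H0, Cnorm_C1; ring. Qed.

Lemma thetaN_le term N k : Cnorm (thetaN term N k) <= Aabs term N k.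
Proof. apply Csum_list_norm. Qed.
Lemma Aabs_ge0 term N k : 0 <= Aabs term N k.
Proof. unfold Aabs. induction (Mset N k); simpl. lra. pose proof (Cnorm_ge0 (term a)); lra. Qed.

Lemma cf_norm a t m n T : 0 <= a m -> Cnorm (t m) <= T ->
  Cnorm (cf a t m n) <= match n with O => 1 | S n' => a m ^ S n' * T ^ n' end.
Proof.
  intros Ha Ht. destruct n. simpl. rewrite Cnorm_C1; lra.
  change (cf a t m (S n)) with (Cmul (RtoC (a m ^ S n)) (Cpow (t m) n)).
  rewrite Cnorm_mul, Cnorm_RtoC, Cnorm_pow, Rabs_pos_eq by (apply pow_le; auto).
  apply Rmult_le_compat_l. apply pow_le; auto. apply pow_incr; split; auto; apply Cnorm_ge0.
Qed.

Lemma sum_conv_ident (x y : nat -> R) K :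
  sum_f_R0 (fun k => sum_f_R0 (fun n => x n * y (k - n)%nat) k) K =
  sum_f_R0 (fun n => x n * sum_f_R0 y (K - n)) K.
Proof.
  induction K. simpl. ring.
  rewrite tech5, IHK.
  rewrite (tech5 (fun n => x n * sum_f_R0 y (S K - n)) K).
  rewrite (sum_eq (fun n => x n * sum_f_R0 y (S K - n)) (fun n => x n * sum_f_R0 y (K - n) + x n * y (S K - n)%nat) K).
  - rewrite sum_plus, (tech5 (fun n => x n * y (S K - n)%nat)).
    replace (S K - S K)%nat with O by lia. simpl (sum_f_R0 y 0). lra.
  - intros i Hi. replace (S K - i)%nat with (S (K - i)) by lia. rewrite tech5. ring.
Qed.

Lemma sum_conv_le (x y : nat -> R) K : (forall n, 0 <= x n) -> (forall n, 0 <= y n) ->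
  sum_f_R0 (fun k => sum_f_R0 (fun n => x n * y (k - n)%nat) k) K <= sum_f_R0 x K * sum_f_R0 y K.
Proof.
  intros Hx Hy. rewrite sum_conv_ident, (Rmult_comm (sum_f_R0 x K)), scal_sum.
  apply sum_Rle; intros n Hn. apply Rmult_le_compat_l; auto.
  assert (forall a b, (a <= b)%nat -> sum_f_R0 y a <= sum_f_R0 y b).
  { intros a0 b Hab. induction Hab. lra. rewrite tech5. specialize (Hy (S m)). lra. }
  apply H; lia.
Qed.

Definition AHyp (a : nat -> R) (s M T : R) (t : nat -> Complex) : Prop :=
  (forall m, (1 <= m)%nat -> 0 < a m) /\ Un_cv (sum_f_R0 (fun i => a (S i))) s /\
  (forall m, (1 <= m)%nat -> a m <= M) /\ 0 < M /\
  (forall m, (1 <= m)%nat -> Cnorm (t m) <= T) /\ 0 <= T.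

Definition Gm (a : nat -> R) (T rho : R) (m : nat) : R := 1 + a m * rho / (1 - a m * rho * T).
Fixpoint PB (a : nat -> R) (T rho : R) (N : nat) : R :=
  match N with O => 1 | S N' => PB a T rho N' * Gm a T rho (S N') end.

Lemma q_bounds a s M T t rho m : AHyp a s M T t -> 0 <= rho -> rho * M * (1 + T) < 1 -> (1 <= m)%nat ->
  0 <= a m * rho * T /\ a m * rho * T < 1 /\ a m * rho * T <= M * rho * T /\ M * rho * T < 1 /\ 0 < a m.
Proof.
  intros (Ha & _ & HM & HM0 & _ & HT) Hr Hrm Hm. specialize (Ha m Hm). specialize (HM m Hm).
  assert (0 <= a m * rho) by nra. assert (a m * rho <= M * rho) by nra.
  assert (a m * rho * T <= M * rho * T) by nra.
  assert (0 <= M * rho) by nra.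
  repeat split; nra.
Qed.

Lemma cf_sum_bound a s M T t rho m : AHyp a s M T t -> 0 <= rho -> rho * M * (1 + T) < 1 -> (1 <= m)%nat ->
  forall K, sum_f_R0 (fun n => Cnorm (cf a t m n) * rho ^ n) K <= Gm a T rho m.
Proof.
  intros H Hr Hrm Hm. destruct (q_bounds a s M T t rho m H Hr Hrm Hm) as (Hq0 & Hq1 & _ & _ & Ham).
  destruct H as (_ & _ & _ & _ & Ht & HT). specialize (Ht m Hm).
  set (q := a m * rho * T) in *.
  assert (Hd : 1 - q <> 0) by lra.
  assert (Hg : forall K, sum_f_R0 (fun n => Cnorm (cf a t m n) * rho ^ n) K <=
     1 + a m * rho / (1 - q) - a m * rho * q ^ K / (1 - q)).
  { induction K.
    - simpl. rewrite Cnorm_C1. replace (a m * rho * 1 / (1 - q)) with (a m * rho / (1 - q)) by (field; auto). lra.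
    - rewrite tech5. eapply Rle_trans; [apply Rplus_le_compat_l|].
      + apply Rmult_le_compat_r; [apply pow_le; auto|]. apply (cf_norm a t m (S K) T); [lra|auto].
      + replace (a m ^ S K * T ^ K * rho ^ S K) with (a m * rho * q ^ K).
        2:{ unfold q. rewrite !Rpow_mult_distr. simpl. ring. }
        assert (a m * rho * q ^ K - a m * rho * q ^ K / (1 - q) = - (a m * rho * q ^ S K / (1 - q))).
        { simpl. field; auto. }
        lra. }
  intro K. eapply Rle_trans; [apply Hg|]. unfold Gm. fold q.
  assert (0 <= a m * rho * q ^ K / (1 - q)).
  { apply Rmult_le_pos. apply Rmult_le_pos. nra. apply pow_le; auto. apply Rlt_le, Rinv_0_lt_compat; lra. }
  lra.
Qed.

Lemma Gm_ge1 a s M T t rho m : AHyp a s M T t -> 0 <= rho -> rho * M * (1 + T) < 1 -> (1 <= m)%nat ->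
  1 <= Gm a T rho m.
Proof.
  intros H Hr Hrm Hm. destruct (q_bounds a s M T t rho m H Hr Hrm Hm) as (Hq0 & Hq1 & _ & _ & Ham).
  unfold Gm. assert (0 <= a m * rho / (1 - a m * rho * T)).
  { apply Rmult_le_pos. nra. apply Rlt_le, Rinv_0_lt_compat; lra. } lra.
Qed.

Lemma PB_ge1 a s M T t rho N : AHyp a s M T t -> 0 <= rho -> rho * M * (1 + T) < 1 -> 1 <= PB a T rho N.
Proof.
  intros H Hr Hrm. induction N; simpl. lra.
  pose proof (Gm_ge1 a s M T t rho (S N) H Hr Hrm ltac:(lia)). nra.
Qed.

Lemma A_bound a s M T t term rho : AHyp a s M T t -> THyp a t term -> 0 <= rho -> rho * M * (1 + T) < 1 ->
  forall N K, sum_f_R0 (fun k => Aabs term N k * rho ^ k) K <= PB a T rho N.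
Proof.
  intros H Ht Hr Hrm. induction N; intro K.
  - simpl. assert (forall K, sum_f_R0 (fun k => Aabs term 0 k * rho ^ k) K = 1).
    { induction K0. simpl. rewrite (Aabs_0 a t); auto. ring.
      rewrite tech5, IHK0, (Aabs_0 a t); auto. ring. }
    rewrite H0; lra.
  - rewrite (sum_eq _ (fun k => sum_f_R0 (fun n => (Cnorm (cf a t (S N) n) * rho ^ n) * (Aabs term N (k - n) * rho ^ (k - n))) k)).
    + simpl PB. eapply Rle_trans;
        [apply (sum_conv_le (fun n => Cnorm (cf a t (S N) n) * rho ^ n) (fun j => Aabs term N j * rho ^ j))|].
      * intro; apply Rmult_le_pos; [apply Cnorm_ge0|apply pow_le; auto].
      * intro; apply Rmult_le_pos; [apply Aabs_ge0|apply pow_le; auto].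
      * pose proof (cf_sum_bound a s M T t rho (S N) H Hr Hrm ltac:(lia) K).
        pose proof (IHN K).
        assert (0 <= sum_f_R0 (fun n => Cnorm (cf a t (S N) n) * rho ^ n) K)
          by (apply cond_pos_sum; intro; apply Rmult_le_pos; [apply Cnorm_ge0|apply pow_le; auto]).
        assert (0 <= sum_f_R0 (fun k => Aabs term N k * rho ^ k) K)
          by (apply cond_pos_sum; intro; apply Rmult_le_pos; [apply Aabs_ge0|apply pow_le; auto]).
        pose proof (PB_ge1 a s M T t rho N H Hr Hrm).
        rewrite Rmult_comm. apply Rmult_le_compat; auto.
    + intros k _. rewrite (A_S a t term N k Ht). rewrite (Rmult_comm (sum_f_R0 _ k)), scal_sum.
      apply sum_eq; intros n Hn.
      assert (Hp : rho ^ k = rho ^ n * rho ^ (k - n)) by (rewrite <- pow_add; f_equal; lia).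
      rewrite Hp. ring.
Qed.

Fixpoint Ssum (g : nat -> R) (N : nat) : R := match N with O => 0 | S N' => Ssum g N' + g (S N') end.

Lemma Ssum_sum g N : Ssum g (S N) = sum_f_R0 (fun i => g (S i)) N.
Proof. induction N. simpl; ring. change (Ssum g (S (S N))) with (Ssum g (S N) + g (S (S N))). rewrite IHN, tech5; auto. Qed.

Lemma exp_le_mono x y : x <= y -> exp x <= exp y.
Proof. intro H. destruct H as [H|H]. left; apply exp_increasing; auto. subst; lra. Qed.

Lemma PB_bound a s M T t rho : AHyp a s M T t -> 0 <= rho -> rho * M * (1 + T) < 1 ->
  forall N, PB a T rho N <= exp (s * (rho / (1 - M * rho * T))).
Proof.
  intros H Hr Hrm N.
  pose proof H as (Ha & Hs & HM & HM0 & _ & HT).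
  set (c := rho / (1 - M * rho * T)).
  assert (HMq : M * rho * T < 1) by nra.
  assert (Hc : 0 <= c) by (apply Rmult_le_pos; auto; apply Rlt_le, Rinv_0_lt_compat; lra).
  assert (HE : PB a T rho N <= exp (Ssum (fun m => a m * c) N)).
  { induction N; simpl. rewrite exp_0; lra.
    rewrite exp_plus. pose proof (PB_ge1 a s M T t rho N H Hr Hrm).
    pose proof (Gm_ge1 a s M T t rho (S N) H Hr Hrm ltac:(lia)).
    apply Rmult_le_compat; try lra.
    eapply Rle_trans; [|apply exp_ineq1_le]. unfold Gm.
    destruct (q_bounds a s M T t rho (S N) H Hr Hrm ltac:(lia)) as (Hq0 & Hq1 & Hq2 & _ & Ham).
    apply Rplus_le_compat_l. unfold c. unfold Rdiv. rewrite Rmult_assoc. apply Rmult_le_compat_l; [lra|].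
    apply Rmult_le_compat_l; auto. apply Rinv_le_contravar; lra. }
  eapply Rle_trans; [exact HE|].
  assert (HS : forall N, Ssum (fun m => a m * c) N = c * Ssum a N).
  { clear. induction N; simpl. ring. rewrite IHN. ring. }
  assert (Hsa : forall N, Ssum a N <= s).
  { assert (Hg : forall n, sum_f_R0 (fun i => a (S i)) n <= s).
    { apply growing_ineq; auto. intro n; rewrite tech5. pose proof (Ha (S (S n)) ltac:(lia)). lra. }
    intro N0; destruct N0. simpl. specialize (Hg O). simpl in Hg. pose proof (Ha 1%nat ltac:(lia)). lra.
    rewrite Ssum_sum. apply Hg. }
  rewrite HS. apply exp_le_mono. rewrite (Rmult_comm s). apply Rmult_le_compat_l; auto.
Qed.

Lemma A_pt_bound a s M T t term rho : AHyp a s M T t -> THyp a t term -> 0 <= rho -> rho * M * (1 + T) < 1 ->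
  forall N k, Aabs term N k * rho ^ k <= exp (s * (rho / (1 - M * rho * T))).
Proof.
  intros H Ht Hr Hrm N k. eapply Rle_trans; [|apply (PB_bound a s M T t rho H Hr Hrm N)].
  eapply Rle_trans; [|apply (A_bound a s M T t term rho H Ht Hr Hrm N k)].
  destruct k. simpl; lra. rewrite tech5.
  assert (0 <= sum_f_R0 (fun k => Aabs term N k * rho ^ k) k)
    by (apply cond_pos_sum; intro; apply Rmult_le_pos; [apply Aabs_ge0|apply pow_le; auto]).
  lra.
Qed.

Lemma Csum_upto_S0 f k : Csum_upto f (S k) = Cadd (f O) (Csum_upto (fun n => f (S n)) k).
Proof. induction k. simpl. ring. change (Csum_upto f (S (S k))) with (Cadd (Csum_upto f (S k)) (f (S (S k)))).
  rewrite IHk. simpl. ring. Qed.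

Lemma th_diff a s M T t term N k : AHyp a s M T t -> THyp a t term ->
  Cnorm (Csub (thetaN term (S N) k) (thetaN term N k)) <= Aabs term (S N) k - Aabs term N k.
Proof.
  intros H Ht. pose proof H as (Ha & _ & _ & _ & Htm & HT).
  rewrite (th_S a t term N k Ht), (A_S a t term N k Ht).
  destruct k.
  - simpl. replace (Csub (Cmul C1 (thetaN term N 0)) (thetaN term N 0)) with C0 by ring.
    rewrite Cnorm_C0, Cnorm_C1. lra.
  - rewrite Csum_upto_S0, decomp_sum by lia. simpl pred.
    set (X := Csum_upto (fun n => Cmul (cf a t (S N) (S n)) (thetaN term N (S k - S n))) k).
    replace (Csub (Cadd (Cmul (cf a t (S N) 0) (thetaN term N (S k - 0))) X) (thetaN term N (S k)))
      with X by (simpl; ring).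
    simpl (cf a t (S N) 0). rewrite Cnorm_C1. replace (S k - 0)%nat with (S k) by lia.
    unfold X. eapply Rle_trans; [apply Csum_norm|].
    replace (1 * Aabs term N (S k) + sum_f_R0 (fun i => Cnorm (cf a t (S N) (S i)) * Aabs term N (S k - S i)) k
      - Aabs term N (S k)) with (sum_f_R0 (fun i => Cnorm (cf a t (S N) (S i)) * Aabs term N (S k - S i)) k) by ring.
    apply sum_Rle; intros. rewrite Cnorm_mul. apply Rmult_le_compat_l. apply Cnorm_ge0. apply thetaN_le.
Qed.

Lemma A_mono a s M T t term N k : AHyp a s M T t -> THyp a t term -> Aabs term N k <= Aabs term (S N) k.
Proof. intros H Ht. pose proof (th_diff a s M T t term N k H Ht). pose proof (Cnorm_ge0 (Csub (thetaN term (S N) k) (thetaN term N k))). lra. Qed.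

Lemma th_tele a s M T t term k : AHyp a s M T t -> THyp a t term ->
  forall n m, (n <= m)%nat -> Cnorm (Csub (thetaN term m k) (thetaN term n k)) <= Aabs term m k - Aabs term n k.
Proof.
  intros H Ht n m Hnm. induction Hnm.
  - replace (Csub (thetaN term n k) (thetaN term n k)) with C0 by ring. rewrite Cnorm_C0; lra.
  - replace (Csub (thetaN term (S m) k) (thetaN term n k)) with
      (Cadd (Csub (thetaN term (S m) k) (thetaN term m k)) (Csub (thetaN term m k) (thetaN term n k))) by ring.
    eapply Rle_trans; [apply Cnorm_triangle|]. pose proof (th_diff a s M T t term m k H Ht). lra.
Qed.

Lemma A_bounded a s M T t term k : AHyp a s M T t -> THyp a t term ->
  exists B, forall N, Aabs term N k <= B.
Proof.
  intros H Ht. pose proof H as (_ & _ & _ & HM & _ & HT).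
  set (rho := / (2 * M * (1 + T))).
  assert (Hr : 0 < rho) by (unfold rho; apply Rinv_0_lt_compat; nra).
  assert (Hrm : rho * M * (1 + T) < 1).
  { unfold rho. replace (/ (2 * M * (1 + T)) * M * (1 + T)) with (/2) by (field; lra). lra. }
  exists (exp (s * (rho / (1 - M * rho * T))) / rho ^ k). intro N.
  pose proof (A_pt_bound a s M T t term rho H Ht (Rlt_le _ _ Hr) Hrm N k).
  assert (0 < rho ^ k) by (apply pow_lt; auto).
  apply (Rmult_le_reg_r (rho ^ k)); auto. unfold Rdiv. rewrite Rmult_assoc, Rinv_l by lra. lra.
Qed.

Definition thlim (term : list nat -> Complex) (k : nat) : Complex :=
  (real (Lim_seq (fun N => fst (thetaN term N k))), real (Lim_seq (fun N => snd (thetaN term N k)))).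

Lemma cauchy_comp (u A : nat -> R) : ex_finite_lim_seq A ->
  (forall n m, (n <= m)%nat -> Rabs (u m - u n) <= A m - A n) -> ex_finite_lim_seq u.
Proof.
  intros HA Hu. apply ex_lim_seq_cauchy_corr. apply ex_lim_seq_cauchy_corr in HA.
  intro eps. destruct (HA eps) as [N HN]. exists N. intros n m Hn Hm.
  destruct (le_lt_dec n m) as [Hnm|Hnm].
  - specialize (Hu n m Hnm). specialize (HN m n Hm Hn). rewrite Rabs_minus_sym.
    eapply Rle_lt_trans; [exact Hu|]. eapply Rle_lt_trans; [apply Rle_abs|exact HN].
  - specialize (Hu m n ltac:(lia)). specialize (HN n m Hn Hm).
    eapply Rle_lt_trans; [exact Hu|]. eapply Rle_lt_trans; [apply Rle_abs|exact HN].
Qed.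

Lemma th_cv a s M T t term k : AHyp a s M T t -> THyp a t term ->
  Ccv (fun N => thetaN term N k) (thlim term k).
Proof.
  intros H Ht. destruct (A_bounded a s M T t term k H Ht) as [B HB].
  assert (HA : ex_finite_lim_seq (fun N => Aabs term N k)).
  { apply (ex_finite_lim_seq_incr _ B); auto. intro; apply (A_mono a s M T t); auto. }
  pose proof (th_tele a s M T t term k H Ht) as Htl.
  apply Ccv_iff; split; simpl; apply Un_cv_is_lim; apply Lim_seq_correct'.
  - apply (cauchy_comp _ _ HA). intros n m Hnm. eapply Rle_trans; [|apply Htl; auto].
    apply (Cnorm_fst (Csub _ _)).
  - apply (cauchy_comp _ _ HA). intros n m Hnm. eapply Rle_trans; [|apply Htl; auto].
    apply (Cnorm_snd (Csub _ _)).
Qed.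

Definition Fm (a : nat -> R) (t : nat -> Complex) (z : Complex) (m : nat) : Complex :=
  Cadd C1 (Cdiv (Cmul (RtoC (a m)) z) (Csub C1 (Cmul (Cmul (RtoC (a m)) z) (t m)))).
Fixpoint Pfin (a : nat -> R) (t : nat -> Complex) (z : Complex) (N : nat) : Complex :=
  match N with O => C1 | S N' => Cmul (Pfin a t z N') (Fm a t z (S N')) end.

Lemma zdom_facts a s M T t z m : AHyp a s M T t -> Cnorm z * M * (1 + T) < 1 -> (1 <= m)%nat ->
  a m * Cnorm z * (1 + T) < 1 /\ a m * Cnorm z * T < 1 /\ 0 <= a m * Cnorm z * (1 + T).
Proof.
  intros (Ha & _ & HM & HM0 & _ & HT) Hz Hm. specialize (Ha m Hm); specialize (HM m Hm).
  pose proof (Cnorm_ge0 z).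
  assert (a m * Cnorm z * (1 + T) <= Cnorm z * M * (1 + T)).
  { replace (Cnorm z * M * (1 + T)) with (M * (Cnorm z * (1 + T))) by ring.
    rewrite Rmult_assoc. apply Rmult_le_compat_r; [nra|auto]. }
  assert (0 <= a m * Cnorm z) by nra.
  replace (a m * Cnorm z * (1 + T)) with (a m * Cnorm z + a m * Cnorm z * T) in * by ring.
  assert (0 <= a m * Cnorm z * T) by nra.
  repeat split; lra.
Qed.

Lemma cf_series a s M T t z m : AHyp a s M T t -> Cnorm z * M * (1 + T) < 1 -> (1 <= m)%nat ->
  Cseries_cv (fun n => Cmul (cf a t m n) (Cpow z n)) (Fm a t z m) /\
  ex_series (fun n => Cnorm (Cmul (cf a t m n) (Cpow z n))).
Proof.
  intros H Hz Hm. destruct (zdom_facts a s M T t z m H Hz Hm) as (H1 & H2 & H3).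
  pose proof H as (Ha & _ & _ & _ & Ht & HT). specialize (Ha m Hm). specialize (Ht m Hm).
  pose proof (Cnorm_ge0 z).
  split.
  - set (w := Cmul (Cmul (RtoC (a m)) z) (t m)).
    assert (Hw : Cnorm w < 1).
    { unfold w. rewrite !Cnorm_mul, Cnorm_RtoC, Rabs_pos_eq by lra.
      assert (a m * Cnorm z * Cnorm (t m) <= a m * Cnorm z * T) by (apply Rmult_le_compat_l; nra). lra. }
    pose proof (Cseries_cons C1 _ _ (Cseries_scal (Cmul (RtoC (a m)) z) _ _ (Cgeom w Hw))) as Hs.
    eapply Cseries_ext; [|exact Hs]. intro n. destruct n; simpl. ring.
    unfold w. rewrite Cpow_mul, Cpow_mul, <- RtoC_pow. change (cf a t m (S n)) with (Cmul (RtoC (a m ^ S n)) (Cpow (t m) n)).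
    change (Cpow z (S n)) with (Cmul z (Cpow z n)). simpl (a m ^ S n). rewrite RtoC_mul. ring.
  - apply (ex_series_le_R _ (fun n => (a m * Cnorm z * (1 + T)) ^ n)).
    + intro n. rewrite Rabs_pos_eq by apply Cnorm_ge0. rewrite Cnorm_mul, Cnorm_pow.
      eapply Rle_trans; [apply Rmult_le_compat_r; [apply pow_le; auto|apply (cf_norm a t m n T); [lra|auto]]|].
      destruct n. simpl; lra.
      rewrite !Rpow_mult_distr.
      assert (T ^ n <= (1 + T) ^ S n).
      { apply Rle_trans with ((1 + T) ^ n). apply pow_incr; lra. simpl. pose proof (pow_le (1+T) n ltac:(lra)). nra. }
      assert (0 <= a m ^ S n) by (apply pow_le; lra). assert (0 <= Cnorm z ^ S n) by (apply pow_le; lra).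
      assert (0 <= a m ^ S n * Cnorm z ^ S n) by nra.
      nra.
    + apply ex_series_geom. rewrite Rabs_pos_eq; lra.
Qed.

Lemma dom_bound a s M T t term z : AHyp a s M T t -> THyp a t term -> Cnorm z * M * (1 + T) < 1 ->
  exists B q, 0 <= q < 1 /\ forall N k, Cnorm (Cmul (thetaN term N k) (Cpow z k)) <= B * q ^ k.
Proof.
  intros H Ht Hz. pose proof H as (_ & _ & _ & HM & _ & HT).
  set (r := Cnorm z). assert (Hr0 : 0 <= r) by apply Cnorm_ge0.
  set (rho := (r + / (M * (1 + T))) / 2).
  assert (Hi : r < / (M * (1 + T))).
  { apply (Rmult_lt_reg_r (M * (1 + T))). nra. rewrite Rinv_l by nra. unfold r; lra. }
  assert (Hip : 0 < / (M * (1 + T))) by (apply Rinv_0_lt_compat; nra).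
  assert (Hrho : 0 < rho) by (unfold rho; lra).
  assert (Hrr : r < rho) by (unfold rho; lra).
  assert (Hrm : rho * M * (1 + T) < 1).
  { assert (rho < / (M * (1 + T))) by (unfold rho; lra).
    apply (Rmult_lt_compat_r (M * (1 + T))) in H0; [|nra]. rewrite Rinv_l in H0 by nra. lra. }
  exists (exp (s * (rho / (1 - M * rho * T)))), (r / rho). split.
  - split. apply Rmult_le_pos; auto. apply Rlt_le, Rinv_0_lt_compat; auto.
    apply (Rmult_lt_reg_r rho); auto. unfold Rdiv; rewrite Rmult_assoc, Rinv_l by lra. lra.
  - intros N k. rewrite Cnorm_mul, Cnorm_pow. fold r.
    eapply Rle_trans; [apply Rmult_le_compat_r; [apply pow_le; auto|apply thetaN_le]|].
    pose proof (A_pt_bound a s M T t term rho H Ht (Rlt_le _ _ Hrho) Hrm N k).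
    replace (r ^ k) with (rho ^ k * (r / rho) ^ k).
    2: { rewrite <- Rpow_mult_distr. f_equal. field. lra. }
    rewrite <- Rmult_assoc. apply Rmult_le_compat_r; auto. apply pow_le.
    apply Rmult_le_pos; auto. apply Rlt_le, Rinv_0_lt_compat; auto.
Qed.

Lemma GF_fin a s M T t term z : AHyp a s M T t -> THyp a t term -> Cnorm z * M * (1 + T) < 1 ->
  forall N, Cseries_cv (fun k => Cmul (thetaN term N k) (Cpow z k)) (Pfin a t z N).
Proof.
  intros H Ht Hz. destruct (dom_bound a s M T t term z H Ht Hz) as (B & q & Hq & HB).
  assert (Hex : forall N, ex_series (fun k => Cnorm (Cmul (thetaN term N k) (Cpow z k)))).
  { intro N. apply (ex_series_le_R _ (fun k => B * q ^ k)).
    - intro; rewrite Rabs_pos_eq by apply Cnorm_ge0; auto.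
    - apply (@ex_series_scal_l R_AbsRing R_NormedModule B). apply ex_series_geom. rewrite Rabs_pos_eq; lra. }
  induction N.
  - simpl. unfold Cseries_cv. apply Ccv_shift1. eapply Ccv_ext; [|apply Ccv_const].
    intro n. induction n. simpl. rewrite (thetaN_0 a t term 1 Ht), (thetaN_0 a t term 0 Ht). simpl. ring.
    change (Csum_upto (fun k => Cmul (thetaN term 0 k) (Cpow z k)) (S (S n))) with
      (Cadd (Csum_upto (fun k => Cmul (thetaN term 0 k) (Cpow z k)) (S n)) (Cmul (thetaN term 0 (S (S n))) (Cpow z (S (S n))))).
    rewrite IHn, (thetaN_0 a t term (S (S n)) Ht). ring.
  - destruct (cf_series a s M T t z (S N) H Hz ltac:(lia)) as [Hc Hca].
    pose proof (Ccauchy _ _ _ _ Hc IHN Hca (Hex N)) as Hcp.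
    simpl Pfin.
    replace (Cmul (Pfin a t z N) (Fm a t z (S N))) with (Cmul (Fm a t z (S N)) (Pfin a t z N)) by ring.
    eapply Cseries_ext; [|exact Hcp]. intro k. simpl.
    rewrite (th_S a t term N k Ht).
    replace (Cmul (Csum_upto (fun n => Cmul (cf a t (S N) n) (thetaN term N (k - n))) k) (Cpow z k))
      with (Cmul (Cpow z k) (Csum_upto (fun n => Cmul (cf a t (S N) n) (thetaN term N (k - n))) k)) by ring.
    rewrite <- Csum_scal. apply Csum_ext. intros n Hn.
    assert (Hp : Cpow z k = Cmul (Cpow z n) (Cpow z (k - n))) by (rewrite <- Cpow_add; f_equal; lia).
    rewrite Hp. ring.
Qed.


Lemma Cprod_Pfin a t z N : Cprod_upto (fun i => Fm a t z (S i)) N = Pfin a t z (S N).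
Proof. induction N. simpl. ring. simpl Cprod_upto. rewrite IHN. reflexivity. Qed.

Lemma GF_main a s M T t term : AHyp a s M T t -> THyp a t term ->
  (forall k, theta_abs_conv term k /\ Ccv (fun N => thetaN term N k) (thlim term k)) /\
  forall z, Cnorm z * M * (1 + T) < 1 ->
    Cseries_abs_conv (fun k => Cmul (thlim term k) (Cpow z k)) /\
    Cseries_cv (fun k => Cmul (thlim term k) (Cpow z k)) (CSeries (fun k => Cmul (thlim term k) (Cpow z k))) /\
    Ccv (Cprod_upto (fun i => Fm a t z (S i))) (CSeries (fun k => Cmul (thlim term k) (Cpow z k))).
Proof.
  intros H Ht. split.
  - intro k. split. apply (A_bounded a s M T t term k H Ht). apply (th_cv a s M T t); auto.
  - intros z Hz. destruct (dom_bound a s M T t term z H Ht Hz) as (B & q & Hq & HB).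
    assert (HU : ex_series (fun k => B * q ^ k)).
    { apply (@ex_series_scal_l R_AbsRing R_NormedModule B). apply ex_series_geom. rewrite Rabs_pos_eq; lra. }
    assert (Hcv : forall k, Ccv (fun N => Cmul (thetaN term N k) (Cpow z k)) (Cmul (thlim term k) (Cpow z k))).
    { intro k. apply Ccv_mul. apply (th_cv a s M T t); auto. apply Ccv_const. }
    assert (Hv : forall k, Cnorm (Cmul (thlim term k) (Cpow z k)) <= B * q ^ k).
    { intro k. eapply Ccv_norm_le; [apply Hcv|]. intro; apply HB. }
    split; [|split].
    + apply abs_conv_iff. apply (ex_series_le_R _ _ (fun k => Rle_trans _ _ _ (Req_le _ _ (Rabs_pos_eq _ (Cnorm_ge0 _))) (Hv k)) HU).
    + apply CSeries_correct. apply (CEx_dom _ (fun k => B * q ^ k)); [exact Hv|exact HU].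
    + refine (Ccv_ext (fun N => Pfin a t z (S N)) _ _ _ _); [intro N; symmetry; apply Cprod_Pfin|].
      apply (Ccv_shift1' (Pfin a t z)).
      eapply Ccv_ext; [intro N; symmetry; apply (Cseries_unique _ _ (GF_fin a s M T t term z H Ht Hz N))|].
      apply (Ctannery (fun N k => Cmul (thetaN term N k) (Cpow z k)) _ (fun k => B * q ^ k)); auto.
Qed.



Lemma Cexp_add x y : Cexp (Cadd x y) = Cmul (Cexp x) (Cexp y).
Proof.
  destruct x as [x1 x2], y as [y1 y2]; unfold Cexp, Cadd, Cmul; simpl.
  rewrite exp_plus, cos_plus, sin_plus. apply Ceq; simpl; ring.
Qed.
Lemma Cexp_0 : Cexp C0 = C1.
Proof. unfold Cexp, C0, C1; simpl. rewrite exp_0, cos_0, sin_0. apply Ceq; simpl; ring. Qed.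

Lemma Cexp_cont u l : Ccv u l -> Ccv (fun n => Cexp (u n)) (Cexp l).
Proof.
  rewrite !Ccv_iff. intros [H1 H2]. simpl.
  assert (E1 : Un_cv (fun n => exp (fst (u n))) (exp (fst l))).
  { apply (continuity_seq exp); auto. apply derivable_continuous_pt, derivable_pt_exp. }
  assert (E2 : Un_cv (fun n => cos (snd (u n))) (cos (snd l))).
  { apply (continuity_seq cos); auto. apply continuity_cos. }
  assert (E3 : Un_cv (fun n => sin (snd (u n))) (sin (snd l))).
  { apply (continuity_seq sin); auto. apply continuity_sin. }
  split; apply CV_mult; auto.
Qed.


Lemma Cinv_RtoC c : c <> 0 -> Cinv (RtoC c) = RtoC (/ c).
Proof. intro H. unfold Cinv, RtoC; simpl. apply Ceq; simpl; field; auto. Qed.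

Definition lgt (w : Complex) (i : nat) : Complex := Cdiv (Cpow w (S i)) (RtoC (INR (S i))).
Definition pp (w : Complex) (j : nat) : R := match j with O => 0 | S i => fst (lgt w i) end.
Definition qq (w : Complex) (j : nat) : R := match j with O => 0 | S i => snd (lgt w i) end.
Definition Lg (w : Complex) : Complex := CSeries (lgt w).

Lemma lgt_alt w i : lgt w i = Cmul (RtoC (/ INR (S i))) (Cpow w (S i)).
Proof. unfold lgt, Cdiv. rewrite Cinv_RtoC by (apply not_0_INR; lia). ring. Qed.

Lemma lgt_norm w i : Cnorm (lgt w i) <= Cnorm w ^ S i.
Proof.
  rewrite lgt_alt, Cnorm_mul, Cnorm_RtoC, Cnorm_pow.
  assert (1 <= INR (S i)) by (apply (le_INR 1); lia).
  rewrite Rabs_pos_eq by (apply Rlt_le, Rinv_0_lt_compat; lra).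
  assert (/ INR (S i) <= 1) by (rewrite <- Rinv_1; apply Rinv_le_contravar; lra).
  pose proof (pow_le (Cnorm w) (S i) (Cnorm_ge0 w)). nra.
Qed.

Lemma lgt_series w : Cnorm w < 1 -> Cseries_cv (lgt w) (Lg w) /\ ex_series (fun i => Cnorm (lgt w i)).
Proof.
  intro Hw. pose proof (Cnorm_ge0 w).
  assert (Hg : ex_series (fun i => Cnorm w ^ S i)).
  { apply ex_series_incr_1 with (a := fun i => Cnorm w ^ i). apply ex_series_geom. rewrite Rabs_pos_eq; lra. }
  split.
  - apply CSeries_correct. apply (CEx_dom _ _ (lgt_norm w) Hg).
  - apply (ex_series_le_R _ _ (fun i => Rle_trans _ _ _ (Req_le _ _ (Rabs_pos_eq _ (Cnorm_ge0 _))) (lgt_norm w i)) Hg).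
Qed.

Lemma Rbar_le_radius (a : nat -> R) r : CV_disk a r -> Rbar_le r (CV_radius a).
Proof. intro H. unfold CV_radius. destruct (Lub_Rbar_correct (CV_disk a)) as [Hub _]. apply Hub; auto. Qed.

Lemma radius_pq w x : Cnorm w < 1 -> Rabs x <= 1 ->
  Rbar_lt (Rabs x) (CV_radius (pp w)) /\ Rbar_lt (Rabs x) (CV_radius (qq w)).
Proof.
  intros Hw Hx. pose proof (Cnorm_ge0 w). set (R0 := 2 / (1 + Cnorm w)).
  assert (HR0 : 1 < R0) by (unfold R0; apply (Rmult_lt_reg_r (1 + Cnorm w)); [lra|]; unfold Rdiv; rewrite Rmult_assoc, Rinv_l; lra).
  assert (HwR : Cnorm w * R0 < 1).
  { unfold R0. apply (Rmult_lt_reg_r (1 + Cnorm w)); [lra|]. unfold Rdiv.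
    replace (Cnorm w * (2 * / (1 + Cnorm w)) * (1 + Cnorm w)) with (2 * Cnorm w) by (field; lra). lra. }
  assert (Hgeo : ex_series (fun n => (Cnorm w * R0) ^ n)) by (apply ex_series_geom; rewrite Rabs_pos_eq; nra).
  assert (Hb : forall n, Rabs (fst (Cpow w n)) * R0 ^ n <= (Cnorm w * R0) ^ n /\ Rabs (snd (Cpow w n)) * R0 ^ n <= (Cnorm w * R0) ^ n).
  { intro n. rewrite Rpow_mult_distr, <- Cnorm_pow. pose proof (pow_le R0 n ltac:(lra)).
    split; apply Rmult_le_compat_r; auto; [apply Cnorm_fst|apply Cnorm_snd]. }
  assert (Hl : forall i, Rabs (fst (lgt w i)) <= Cnorm w ^ S i /\ Rabs (snd (lgt w i)) <= Cnorm w ^ S i).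
  { intro i. split; eapply Rle_trans; [apply Cnorm_fst|apply lgt_norm|apply Cnorm_snd|apply lgt_norm]. }
  assert (HD : CV_disk (pp w) R0 /\ CV_disk (qq w) R0).
  { split; (eapply ex_series_le_R; [|exact Hgeo]); intro n; simpl; rewrite Rabs_Rabsolu, Rabs_mult, (Rabs_pos_eq (R0 ^ n)) by (apply pow_le; lra);
    (destruct n; [simpl; rewrite Rabs_R0; lra|]); simpl pp; simpl qq;
    rewrite Rpow_mult_distr; apply Rmult_le_compat_r; try (apply pow_le; lra); apply Hl. }
  destruct HD as [H1 H2]. apply Rbar_le_radius in H1, H2.
  split; [destruct (CV_radius (pp w)) | destruct (CV_radius (qq w))]; simpl in *; auto; lra.
Qed.

Definition Dw (w : Complex) (x : R) : Complex := Cmul w (Cinv (Csub C1 (Cmul (RtoC x) w))).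

Lemma xw_small w x : Cnorm w < 1 -> Rabs x <= 1 -> Cnorm (Cmul (RtoC x) w) < 1.
Proof.
  intros Hw Hx. rewrite Cnorm_mul, Cnorm_RtoC. pose proof (Cnorm_ge0 w). pose proof (Rabs_pos x). nra.
Qed.

Lemma PS_derive_pp w n : PS_derive (pp w) n = fst (Cpow w (S n)).
Proof.
  unfold PS_derive. change (pp w (S n)) with (fst (lgt w n)). rewrite lgt_alt.
  assert (INR (S n) <> 0) by (apply not_0_INR; lia).
  destruct (Cpow w (S n)) as [c1 c2]. simpl. field; auto.
Qed.
Lemma PS_derive_qq w n : PS_derive (qq w) n = snd (Cpow w (S n)).
Proof.
  unfold PS_derive. change (qq w (S n)) with (snd (lgt w n)). rewrite lgt_alt.
  assert (INR (S n) <> 0) by (apply not_0_INR; lia).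
  destruct (Cpow w (S n)) as [c1 c2]. simpl. field; auto.
Qed.

Lemma Dw_series w x : Cnorm w < 1 -> Rabs x <= 1 ->
  Cseries_cv (fun n => Cmul (RtoC (x ^ n)) (Cpow w (S n))) (Dw w x).
Proof.
  intros Hw Hx. pose proof (Cseries_scal w _ _ (Cgeom _ (xw_small w x Hw Hx))) as H.
  eapply Cseries_ext; [|exact H]. intro n. simpl. rewrite Cpow_mul, <- RtoC_pow. ring.
Qed.

Lemma PSeries_deriv_vals w x : Cnorm w < 1 -> Rabs x <= 1 ->
  PSeries (PS_derive (pp w)) x = fst (Dw w x) /\ PSeries (PS_derive (qq w)) x = snd (Dw w x).
Proof.
  intros Hw Hx. pose proof (Dw_series w x Hw Hx) as HD. apply Cseries_iff in HD as [H1 H2].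
  unfold PSeries. split; apply is_series_unique; eapply is_series_ext; try eassumption; intro n.
  - rewrite PS_derive_pp. simpl. destruct w as [w1 w2]. destruct (Cpow (w1, w2) n) as [c1 c2]; simpl. ring.
  - rewrite PS_derive_qq. simpl. destruct w as [w1 w2]. destruct (Cpow (w1, w2) n) as [c1 c2]; simpl. ring.
Qed.

Lemma PSeries_one w : Cnorm w < 1 -> PSeries (pp w) 1 = fst (Lg w) /\ PSeries (qq w) 1 = snd (Lg w).
Proof.
  intro Hw. destruct (lgt_series w Hw) as [Hs _]. apply Cseries_CEx in Hs as [H1 H2].
  unfold PSeries. split.
  - rewrite (Series_ext _ (pp w)) by (intro; rewrite pow1; ring).
    rewrite Series_incr_1. simpl. ring.
    apply ex_series_incr_1. exact H1.
  - rewrite (Series_ext _ (qq w)) by (intro; rewrite pow1; ring).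
    rewrite Series_incr_1. simpl. ring.
    apply ex_series_incr_1. exact H2.
Qed.

Lemma Dw_rel w x : Cnorm w < 1 -> Rabs x <= 1 -> Cmul (Dw w x) (Csub C1 (Cmul (RtoC x) w)) = w.
Proof. intros Hw Hx. pose proof (one_minus_nz _ (xw_small w x Hw Hx)). unfold Dw. field; auto. Qed.

Lemma core w : Cnorm w < 1 -> Cmul (Cexp (Lg w)) (Csub C1 w) = C1.
Proof.
  intro Hw. destruct w as [w1 w2].
  set (P := PSeries (pp (w1, w2))). set (Q := PSeries (qq (w1, w2))).
  set (hr := fun x => exp (P x) * cos (Q x) * (1 - x * w1) + exp (P x) * sin (Q x) * (x * w2)).
  set (hi := fun x => - (exp (P x) * cos (Q x) * (x * w2)) + exp (P x) * sin (Q x) * (1 - x * w1)).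
  assert (Hd : forall x, 0 <= x <= 1 -> ex_derive P x /\ ex_derive Q x /\
      Derive P x = fst (Dw (w1, w2) x) /\ Derive Q x = snd (Dw (w1, w2) x)).
  { intros x Hx. assert (Hax : Rabs x <= 1) by (rewrite Rabs_pos_eq; lra).
    destruct (radius_pq (w1, w2) x Hw Hax) as [R1 R2].
    destruct (PSeries_deriv_vals (w1, w2) x Hw Hax) as [V1 V2].
    unfold P, Q. repeat split.
    - apply ex_derive_PSeries; auto.
    - apply ex_derive_PSeries; auto.
    - rewrite Derive_PSeries; auto.
    - rewrite Derive_PSeries; auto. }
  assert (Hrel : forall x, 0 <= x <= 1 ->
     fst (Dw (w1, w2) x) * (1 - x * w1) + snd (Dw (w1, w2) x) * (x * w2) = w1 /\
     - (fst (Dw (w1, w2) x) * (x * w2)) + snd (Dw (w1, w2) x) * (1 - x * w1) = w2).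
  { intros x Hx. assert (Hax : Rabs x <= 1) by (rewrite Rabs_pos_eq; lra).
    pose proof (Dw_rel (w1, w2) x Hw Hax) as E.
    destruct (Dw (w1, w2) x) as [d1 d2]. unfold Cmul, Csub, Cadd, Copp, C1, RtoC in E; simpl in E.
    injection E; intros E2 E1. simpl. split; nra. }
  assert (Dr : forall x, 0 <= x <= 1 -> is_derive hr x zero).
  { intros x Hx. destruct (Hd x Hx) as (e1 & e2 & d1 & d2). destruct (Hrel x Hx) as [r1 r2].
    unfold hr. auto_derive; [tauto|].
    change (Derive (fun x0 => P x0) x) with (Derive P x). change (Derive (fun x0 => Q x0) x) with (Derive Q x).
    rewrite d1, d2.
    set (D1 := fst (Dw (w1, w2) x)) in *. set (D2 := snd (Dw (w1, w2) x)) in *.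
    transitivity (exp (P x) * cos (Q x) * (D1 * (1 - x * w1) + D2 * (x * w2) - w1)
      + exp (P x) * sin (Q x) * (w2 - (- (D1 * (x * w2)) + D2 * (1 - x * w1)))).
    ring. rewrite r1, r2. unfold zero; simpl. ring. }
  assert (Di : forall x, 0 <= x <= 1 -> is_derive hi x zero).
  { intros x Hx. destruct (Hd x Hx) as (e1 & e2 & d1 & d2). destruct (Hrel x Hx) as [r1 r2].
    unfold hi. auto_derive; [tauto|].
    change (Derive (fun x0 => P x0) x) with (Derive P x). change (Derive (fun x0 => Q x0) x) with (Derive Q x).
    rewrite d1, d2.
    set (D1 := fst (Dw (w1, w2) x)) in *. set (D2 := snd (Dw (w1, w2) x)) in *.
    transitivity (exp (P x) * cos (Q x) * ((- (D1 * (x * w2)) + D2 * (1 - x * w1)) - w2)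
      + exp (P x) * sin (Q x) * (D1 * (1 - x * w1) + D2 * (x * w2) - w1)).
    ring. rewrite r1, r2. unfold zero; simpl. ring. }
  pose proof (eq_is_derive hr 0 1 Dr Rlt_0_1) as Er.
  pose proof (eq_is_derive hi 0 1 Di Rlt_0_1) as Ei.
  assert (P0 : P 0 = 0) by (unfold P; rewrite PSeries_0; reflexivity).
  assert (Q0 : Q 0 = 0) by (unfold Q; rewrite PSeries_0; reflexivity).
  destruct (PSeries_one (w1, w2) Hw) as [P1 Q1]. fold P in P1. fold Q in Q1.
  unfold hr, hi in Er, Ei. rewrite P0, Q0, P1, Q1, exp_0, cos_0, sin_0 in *.
  destruct (Lg (w1, w2)) as [L1 L2]. cbn [fst snd] in *.
  unfold Cexp, Cmul, Csub, Cadd, Copp, C1. apply Ceq; cbn [fst snd].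
  - lra.
  - lra.
Qed.



Definition vv (a : nat -> R) (t : nat -> Complex) (z : Complex) (m : nat) : Complex :=
  Cmul (Cmul (RtoC (a m)) z) (t m).
Definition uu (a : nat -> R) (t : nat -> Complex) (z : Complex) (m : nat) : Complex :=
  Cmul (Cmul (RtoC (a m)) z) (Csub (t m) C1).
Definition ell a t z m : Complex := Csub (Lg (vv a t z m)) (Lg (uu a t z m)).

Lemma vu_small a s M T t z m : AHyp a s M T t -> Cnorm z * M * (1 + T) < 1 -> (1 <= m)%nat ->
  Cnorm (vv a t z m) < 1 /\ Cnorm (uu a t z m) < 1.
Proof.
  intros H Hz Hm. destruct (zdom_facts a s M T t z m H Hz Hm) as (H1 & H2 & H3).
  pose proof H as (Ha & _ & _ & _ & Ht & HT). specialize (Ha m Hm). specialize (Ht m Hm).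
  pose proof (Cnorm_ge0 z). assert (0 <= a m * Cnorm z) by nra.
  unfold vv, uu. rewrite !Cnorm_mul, Cnorm_RtoC, Rabs_pos_eq by lra. split.
  - assert (a m * Cnorm z * Cnorm (t m) <= a m * Cnorm z * T) by (apply Rmult_le_compat_l; lra). lra.
  - pose proof (Cnorm_triangle_sub (t m) C1) as Htr. rewrite Cnorm_C1 in Htr.
    assert (a m * Cnorm z * Cnorm (Csub (t m) C1) <= a m * Cnorm z * (1 + T)) by (apply Rmult_le_compat_l; lra). lra.
Qed.

Lemma Cexp_ell a s M T t z m : AHyp a s M T t -> Cnorm z * M * (1 + T) < 1 -> (1 <= m)%nat ->
  Cexp (ell a t z m) = Fm a t z m.
Proof.
  intros H Hz Hm. destruct (vu_small a s M T t z m H Hz Hm) as [Hv Hu].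
  pose proof (core _ Hv) as Cv. pose proof (core _ Hu) as Cu.
  pose proof (one_minus_nz _ Hv) as Nv.
  assert (E1 : Cexp (Lg (vv a t z m)) = Cinv (Csub C1 (vv a t z m))).
  { replace (Cexp (Lg (vv a t z m))) with (Cmul (Cmul (Cexp (Lg (vv a t z m))) (Csub C1 (vv a t z m))) (Cinv (Csub C1 (vv a t z m)))) by (field; auto).
    rewrite Cv. ring. }
  assert (E2 : Cexp (Copp (Lg (uu a t z m))) = Csub C1 (uu a t z m)).
  { assert (Cmul (Cexp (Lg (uu a t z m))) (Cexp (Copp (Lg (uu a t z m)))) = C1).
    { rewrite <- Cexp_add. replace (Cadd (Lg (uu a t z m)) (Copp (Lg (uu a t z m)))) with C0 by ring. apply Cexp_0. }
    set (X := Cexp (Lg (uu a t z m))) in *. set (Y := Cexp (Copp (Lg (uu a t z m)))) in *.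
    set (U := Csub C1 (uu a t z m)) in *.
    transitivity (Cmul Y (Cmul X U)). rewrite Cu; ring.
    transitivity (Cmul (Cmul X Y) U). ring. rewrite H0; ring. }
  unfold ell, Csub at 1. rewrite Cexp_add, E1, E2. unfold Fm, Cdiv.
  fold (vv a t z m). unfold uu. unfold vv in *. field. auto.
Qed.

Definition iterm (a : nat -> R) (t : nat -> Complex) (j m : nat) : Complex :=
  Cmul (RtoC (a m ^ j)) (Csub (Cpow (t m) j) (Cpow (Csub (t m) C1) j)).
Definition zfac (z : Complex) (j : nat) : Complex := Cdiv (Cpow z j) (RtoC (INR j)).
Definition hterm a t z m i : Complex := Cmul (zfac z (S i)) (iterm a t (S i) m).

Lemma hterm_series a s M T t z m : AHyp a s M T t -> Cnorm z * M * (1 + T) < 1 -> (1 <= m)%nat ->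
  Cseries_cv (hterm a t z m) (ell a t z m).
Proof.
  intros H Hz Hm. destruct (vu_small a s M T t z m H Hz Hm) as [Hv Hu].
  pose proof (Cseries_sub _ _ _ _ (proj1 (lgt_series _ Hv)) (proj1 (lgt_series _ Hu))) as Hs.
  eapply Cseries_ext; [|exact Hs]. intro i.
  unfold lgt, hterm, zfac, iterm, vv, uu, Cdiv. rewrite !Cpow_mul, <- RtoC_pow. ring.
Qed.

Lemma zfac_norm z j : (1 <= j)%nat -> Cnorm (zfac z j) <= Cnorm z ^ j.
Proof.
  intro Hj. unfold zfac, Cdiv. assert (1 <= INR j) by (apply (le_INR 1); lia).
  rewrite Cinv_RtoC by lra. rewrite Cnorm_mul, Cnorm_RtoC, Cnorm_pow.
  rewrite Rabs_pos_eq by (apply Rlt_le, Rinv_0_lt_compat; lra).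
  assert (/ INR j <= 1) by (rewrite <- Rinv_1; apply Rinv_le_contravar; lra).
  pose proof (pow_le (Cnorm z) j (Cnorm_ge0 z)). pose proof (Rinv_0_lt_compat (INR j) ltac:(lra)). nra.
Qed.

Definition Kc (M T : R) (j : nat) : R := 2 * (1 + T) ^ j * M ^ (pred j).

Lemma iterm_norm a s M T t j m : AHyp a s M T t -> (1 <= j)%nat -> (1 <= m)%nat ->
  Cnorm (iterm a t j m) <= Kc M T j * a m.
Proof.
  intros H Hj Hm. pose proof H as (Ha & _ & HM & HM0 & Ht & HT).
  specialize (Ha m Hm); specialize (HM m Hm); specialize (Ht m Hm).
  unfold iterm, Kc. rewrite Cnorm_mul, Cnorm_RtoC, Rabs_pos_eq by (apply pow_le; lra).
  assert (Hd : Cnorm (Csub (Cpow (t m) j) (Cpow (Csub (t m) C1) j)) <= 2 * (1 + T) ^ j).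
  { eapply Rle_trans; [apply Cnorm_triangle_sub|]. rewrite !Cnorm_pow.
    pose proof (Cnorm_triangle_sub (t m) C1) as Htr. rewrite Cnorm_C1 in Htr.
    pose proof (Cnorm_ge0 (t m)). pose proof (Cnorm_ge0 (Csub (t m) C1)).
    assert (Cnorm (t m) ^ j <= (1 + T) ^ j) by (apply pow_incr; lra).
    assert (Cnorm (Csub (t m) C1) ^ j <= (1 + T) ^ j) by (apply pow_incr; lra). lra. }
  assert (Ha2 : a m ^ j <= a m * M ^ pred j).
  { destruct j; [lia|]. simpl pred. simpl. apply Rmult_le_compat_l; [lra|]. apply pow_incr; lra. }
  pose proof (Cnorm_ge0 (Csub (Cpow (t m) j) (Cpow (Csub (t m) C1) j))).
  assert (0 <= a m ^ j) by (apply pow_le; lra). assert (0 <= M ^ pred j) by (apply pow_le; lra).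
  assert (0 <= (1 + T) ^ j) by (apply pow_le; lra).
  apply Rle_trans with (a m * M ^ pred j * (2 * (1 + T) ^ j)).
  - apply Rmult_le_compat; auto.
  - right; ring.
Qed.

Lemma a_partial a s M T t : AHyp a s M T t -> forall N, sum_f_R0 (fun i => a (S i)) N <= s.
Proof.
  intros (Ha & Hs & _) N. apply growing_ineq; auto. intro n; rewrite tech5. pose proof (Ha (S (S n)) ltac:(lia)). lra.
Qed.
Lemma a_ex a s M T t : AHyp a s M T t -> is_series (fun i => a (S i)) s.
Proof. intros (Ha & Hs & _). apply is_series_Un_cv; auto. Qed.

Definition inner (a : nat -> R) (t : nat -> Complex) (j : nat) : Complex :=
  CSeries (fun i => iterm a t j (S i)).

Lemma inner_series a s M T t j : AHyp a s M T t -> (1 <= j)%nat ->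
  Cseries_cv (fun i => iterm a t j (S i)) (inner a t j) /\ Cnorm (inner a t j) <= Kc M T j * s.
Proof.
  intros H Hj.
  assert (Hb : forall i, Cnorm (iterm a t j (S i)) <= Kc M T j * a (S i)) by (intro; apply (iterm_norm a s M T); auto; lia).
  assert (Hex : ex_series (fun i => Kc M T j * a (S i))).
  { apply (@ex_series_scal_l R_AbsRing R_NormedModule). exists s. apply (a_ex a s M T t H). }
  assert (Hc : Cseries_cv (fun i => iterm a t j (S i)) (inner a t j)) by (apply CSeries_correct, (CEx_dom _ _ Hb Hex)).
  split; auto.
  apply (Ccv_norm_le _ _ _ Hc). intro N. eapply Rle_trans; [apply Csum_norm|].
  eapply Rle_trans; [apply sum_Rle; intros; apply Hb|].
  rewrite (sum_eq _ (fun i => a (S i) * Kc M T j)) by (intros; ring).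
  rewrite <- scal_sum. pose proof (a_partial a s M T t H N).
  assert (0 <= Kc M T j).
  { pose proof H as (_ & _ & _ & HM0 & _ & HT). unfold Kc. pose proof (pow_le (1+T) j ltac:(lra)).
    pose proof (pow_le M (pred j) ltac:(lra)). nra. }
  apply Rmult_le_compat_l; auto.
Qed.

Lemma exp_part a s M T t z : AHyp a s M T t -> Cnorm z * M * (1 + T) < 1 ->
  (forall j, (1 <= j)%nat -> Cseries_cv (fun i => iterm a t j (S i)) (inner a t j)) /\
  Cseries_cv (fun i => Cmul (zfac z (S i)) (inner a t (S i))) (CSeries (fun i => Cmul (zfac z (S i)) (inner a t (S i)))) /\
  Ccv (Cprod_upto (fun i => Fm a t z (S i))) (Cexp (CSeries (fun i => Cmul (zfac z (S i)) (inner a t (S i))))).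
Proof.
  intros H Hz. pose proof H as (Ha & Hs & HM & HM0 & Ht & HT).
  set (r := Cnorm z). assert (Hr : 0 <= r) by apply Cnorm_ge0.
  assert (Hs0 : 0 <= s) by (pose proof (a_partial a s M T t H 0); simpl in H0; pose proof (Ha 1%nat ltac:(lia)); lra).
  set (U := fun i => r ^ S i * (Kc M T (S i) * s)).
  assert (HU : ex_series U).
  { apply (ex_series_ext (fun i => (2 * s * (1 + T) * r) * (r * M * (1 + T)) ^ i)).
    - intro i. unfold U, Kc. simpl pred. rewrite !Rpow_mult_distr. simpl. ring.
    - apply (@ex_series_scal_l R_AbsRing R_NormedModule). apply ex_series_geom.
      rewrite Rabs_pos_eq; [fold r in Hz; nra|]. apply Rmult_le_pos; [|lra]. apply Rmult_le_pos; lra. }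
  set (Lterm := fun i => Cmul (zfac z (S i)) (inner a t (S i))).
  assert (HLb : forall i, Cnorm (Lterm i) <= U i).
  { intro i. unfold Lterm, U. rewrite Cnorm_mul. apply Rmult_le_compat.
    apply Cnorm_ge0. apply Cnorm_ge0. apply zfac_norm; lia. apply (inner_series a s M T t (S i) H); lia. }
  split; [intros j Hj; apply (inner_series a s M T t j H Hj)|]. split.
  { apply CSeries_correct. apply (CEx_dom _ _ HLb HU). }
  set (X := fun N => Csum_upto (fun i' => ell a t z (S i')) N).
  set (gN := fun N i => Csum_upto (fun i' => hterm a t z (S i') i) N).
  assert (Hg : forall N, Cseries_cv (gN N) (X N)).
  { induction N.
    - unfold gN, X; simpl. apply (hterm_series a s M T t z 1 H Hz); lia.
    - unfold gN, X; simpl. apply Cseries_add; [exact IHN|]. apply (hterm_series a s M T t z (S (S N)) H Hz); lia. }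
  assert (HX : Ccv X (CSeries Lterm)).
  { refine (Ccv_ext (fun N => CSeries (gN N)) X _ _ _).
    - intro N. symmetry. apply Cseries_unique. apply Hg.
    - apply (Ctannery gN Lterm U); auto.
      + intro i. unfold gN, Lterm.
        refine (Ccv_ext (fun N => Cmul (zfac z (S i)) (Csum_upto (fun i' => iterm a t (S i) (S i')) N)) _ _ _ _).
        * intro N. rewrite <- Csum_scal. reflexivity.
        * apply Ccv_mul. apply Ccv_const. apply (inner_series a s M T t (S i) H); lia.
      + intros N i. unfold gN, U.
        change (Csum_upto (fun i' => hterm a t z (S i') i) N) with
          (Csum_upto (fun i' => Cmul (zfac z (S i)) (iterm a t (S i) (S i'))) N).
        rewrite Csum_scal. rewrite Cnorm_mul. apply Rmult_le_compat.
        apply Cnorm_ge0. apply Cnorm_ge0. apply zfac_norm; lia.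
        eapply Rle_trans; [apply Csum_norm|].
        eapply Rle_trans; [apply sum_Rle; intros; apply (iterm_norm a s M T t); [exact H|lia|lia]|].
        rewrite (sum_eq _ (fun i0 => a (S i0) * Kc M T (S i))) by (intros; ring).
        rewrite <- scal_sum. apply Rmult_le_compat_l. unfold Kc. pose proof (pow_le (1+T) (S i) ltac:(lra)).
        pose proof (pow_le M (pred (S i)) ltac:(lra)). nra. apply (a_partial a s M T t H). }
  refine (Ccv_ext (fun N => Cexp (X N)) _ _ _ _).
  - intro N. induction N.
    + unfold X; simpl. rewrite (Cexp_ell a s M T t z 1 H Hz) by lia. reflexivity.
    + unfold X in *. simpl. rewrite Cexp_add, IHN, (Cexp_ell a s M T t z (S (S N)) H Hz) by lia. reflexivity.
  - apply Cexp_cont. exact HX.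
Qed.



Lemma GF_all a s M T t term : AHyp a s M T t -> THyp a t term ->
  GF_conclusion a t term (fun z => Cnorm z * M * (1 + T) < 1).
Proof.
  intros H Ht. destruct (GF_main a s M T t term H Ht) as [H1 H2].
  exists (thlim term). split; [exact H1|].
  intros z Hz. destruct (H2 z Hz) as (A1 & A2 & A3).
  split; [exact A1|].
  exists (CSeries (fun k => Cmul (thlim term k) (Cpow z k))).
  split; [exact A2|]. split; [exact A3|].
  destruct (exp_part a s M T t z H Hz) as (E1 & E2 & E3).
  exists (inner a t), (CSeries (fun i => Cmul (zfac z (S i)) (inner a t (S i)))).
  split; [exact E1|]. split; [exact E2|].
  exact (Ccv_unique _ _ _ A3 E3).
Qed.

Theorem mainTheorem10 :
  forall (a : nat -> R) (M : R),
    (forall m : nat, (1 <= m)%nat -> 0 < a m) ->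
    (exists s : R, Un_cv (sum_f_R0 (fun i => a (S i))) s) ->
    is_lub (fun x => exists m : nat, (1 <= m)%nat /\ x = a m) M ->
    (forall (t : nat -> Complex) (T : R),
        (forall m : nat, (1 <= m)%nat -> Cnorm (t m) <= T) ->
        GF_conclusion a t (term_vec a t) (fun z => Cnorm z * M * (1 + T) < 1))
    /\
    (forall (t : Complex) (T : R),
        Cnorm t <= T ->
        GF_conclusion a (fun _ => t) (term_sc a t) (fun z => Cnorm z * M * (1 + T) < 1)).
Proof.
  intros a M Ha [s Hs] [Hub _].
  assert (HM : forall m, (1 <= m)%nat -> a m <= M) by (intros m Hm; apply Hub; exists m; auto).
  assert (HM0 : 0 < M) by (pose proof (Ha 1%nat ltac:(lia)); pose proof (HM 1%nat ltac:(lia)); lra).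
  split.
  - intros t T Ht. assert (HT : 0 <= T) by (pose proof (Ht 1%nat ltac:(lia)); pose proof (Cnorm_ge0 (t 1%nat)); lra).
    apply (GF_all a s M T t).
    + repeat split; auto.
    + split.
      * unfold term_vec; simpl. apply Ceq; simpl; ring.
      * intros N l' n Hg. apply term_vec_fac; auto.
  - intros t T Ht. assert (HT : 0 <= T) by (pose proof (Cnorm_ge0 t); lra).
    apply (GF_all a s M T (fun _ => t)).
    + repeat split; auto.
    + split.
      * unfold term_sc; simpl. apply Ceq; simpl; ring.
      * intros N l' n Hg. apply term_sc_fac; auto.
Qed.
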